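(* Let $(a_n)_{n\ge 1}$ be complex numbers and let $\sigma$ be the (finite) abscissa of absolute convergence of $\sum_{n\ge1} a_n n^{-s}$, i.e. $\sum |a_n| n^{-s}$ converges for real $s>\sigma$ and diverges for real $s<\sigma$; let $f(s)=\sum a_n n^{-s}$ for $\Re(s)>\sigma$. Let $c>0$ be real with $c>\sigma$, and let $R_c(x) = \sum_{k=1}^\infty (-1)^{k+1} f(ck)\,x^k/(k-1)!$. Then for every complex $s$ with $-1 < \Re(s) < -\sigma/c$, $$\int_0^\infty R_c(x)\,x^{s-1}\,dx = f(-cs)\,\Gamma(s+1),$$ the integral converging absolutely. *)

(* Defs.v *)
From Stdlib Require Import Arith Reals Lra ClassicalEpsilon.
Open Scope R_scope.

Definition Cpx := (R * R)%type.
Definition Re (z : Cpx) : R := fst z.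
Definition Im (z : Cpx) : R := snd z.
Definition RtoC (x : R) : Cpx := (x, 0).
Definition Cadd (z w : Cpx) : Cpx := (Re z + Re w, Im z + Im w).
Definition Copp (z : Cpx) : Cpx := (- Re z, - Im z).
Definition Cmul (z w : Cpx) : Cpx :=
  (Re z * Re w - Im z * Im w, Re z * Im w + Im z * Re w).
Definition Cnorm (z : Cpx) : R := sqrt (Re z * Re z + Im z * Im z).
Definition Cexp (z : Cpx) : Cpx := (exp (Re z) * cos (Im z), exp (Re z) * sin (Im z)).
Definition Rcpow (x : R) (z : Cpx) : Cpx := Cexp (Cmul z (RtoC (ln x))).

Definition Csum (u : nat -> Cpx) (N : nat) : Cpx :=
  (sum_f_R0 (fun k => Re (u k)) N, sum_f_R0 (fun k => Im (u k)) N).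
Definition Cseries_cv (u : nat -> Cpx) (l : Cpx) : Prop :=
  Un_cv (fun N => Re (Csum u N)) (Re l) /\ Un_cv (fun N => Im (Csum u N)) (Im l).
(** the sum of a convergent series (an arbitrary value if it diverges) *)
Definition Cseries (u : nat -> Cpx) : Cpx :=
  epsilon (inhabits (0, 0)) (fun l => Cseries_cv u l).

Definition dirichlet (a : nat -> Cpx) (s : Cpx) : Cpx :=
  Cseries (fun k => Cmul (a (S k)) (Rcpow (INR (S k)) (Copp s))).

(** R_c(x) = sum_{k>=1} (-1)^{k+1} f(ck) x^k/(k-1)! ; summation index j = k-1 *)
Definition Rc (a : nat -> Cpx) (c : R) (x : R) : Cpx :=
  Cseries (fun j =>
    let k := S j in
    Cmul (RtoC ((-1) ^ (k + 1) * x ^ k / INR (fact (k - 1))))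
         (dirichlet a (RtoC (c * INR k)))).

Definition RInt_is (f : R -> R) (a b v : R) : Prop :=
  exists pr : Riemann_integrable f a b, RiemannInt pr = v.

(** [ImpInt_abs g v]: g : (0,oo) -> Cpx is Riemann integrable on every
    [a,b] with 0 < a <= b, int_0^oo |g| < oo, and int_a^b g -> v as
    a -> 0+, b -> +oo. *)
Definition ImpInt_abs (g : R -> Cpx) (v : Cpx) : Prop :=
  (forall a b, 0 < a -> a <= b ->
     exists vr vi vn, RInt_is (fun x => Re (g x)) a b vr /\
                      RInt_is (fun x => Im (g x)) a b vi /\
                      RInt_is (fun x => Cnorm (g x)) a b vn)
  /\ (exists M, forall a b vn, 0 < a -> a <= b ->
        RInt_is (fun x => Cnorm (g x)) a b vn -> vn <= M)
  /\ (forall eps, 0 < eps -> exists d B, 0 < d /\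
        forall a b vr vi, 0 < a -> a < d -> B < b ->
          RInt_is (fun x => Re (g x)) a b vr ->
          RInt_is (fun x => Im (g x)) a b vi ->
          Rabs (vr - Re v) < eps /\ Rabs (vi - Im v) < eps).

Definition CGamma (z : Cpx) : Cpx :=
  epsilon (inhabits (0, 0))
    (fun v => ImpInt_abs (fun t => Cmul (Rcpow t (Cadd z (RtoC (-1)))) (RtoC (exp (- t)))) v).

(* Main.v *)
Require Import Defs.
From Stdlib Require Import Arith ZArith Reals Lra Lia Psatz ClassicalEpsilon FunctionalExtensionality Factorial.
From Coquelicot Require Import Coquelicot.
Import Defs.
Open Scope R_scope.

Lemma Cpx_eq (z w : Cpx) : Re z = Re w -> Im z = Im w -> z = w.
Proof. destruct z, w; unfold Re, Im; simpl; intros -> ->; reflexivity. Qed.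

Lemma Cnorm_ge0 z : 0 <= Cnorm z.
Proof. apply sqrt_pos. Qed.

Lemma Re_le_Cnorm z : Rabs (Re z) <= Cnorm z.
Proof.
  unfold Cnorm. rewrite <- sqrt_Rsqr_abs. apply sqrt_le_1_alt. unfold Rsqr. nra.
Qed.

Lemma Im_le_Cnorm z : Rabs (Im z) <= Cnorm z.
Proof.
  unfold Cnorm. rewrite <- sqrt_Rsqr_abs. apply sqrt_le_1_alt. unfold Rsqr. nra.
Qed.

Lemma Cnorm_le_sum z : Cnorm z <= Rabs (Re z) + Rabs (Im z).
Proof.
  unfold Cnorm. rewrite <- (sqrt_Rsqr (Rabs (Re z) + Rabs (Im z))).
  2: { pose proof (Rabs_pos (Re z)); pose proof (Rabs_pos (Im z)); lra. }
  apply sqrt_le_1_alt. unfold Rsqr.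
  pose proof (Rabs_pos (Re z)); pose proof (Rabs_pos (Im z)).
  assert (E1: Rabs (Re z) * Rabs (Re z) = Re z * Re z) by (rewrite <- Rabs_mult; apply Rabs_right; nra).
  assert (E2: Rabs (Im z) * Rabs (Im z) = Im z * Im z) by (rewrite <- Rabs_mult; apply Rabs_right; nra).
  nra.
Qed.

Lemma Cnorm_mul z w : Cnorm (Cmul z w) = Cnorm z * Cnorm w.
Proof.
  unfold Cnorm, Cmul, Re, Im; simpl. rewrite <- sqrt_mult by nra.
  f_equal. ring.
Qed.

Lemma Cnorm_RtoC x : Cnorm (RtoC x) = Rabs x.
Proof. unfold Cnorm, RtoC, Re, Im; simpl. rewrite Rmult_0_l, Rplus_0_r. apply sqrt_Rsqr_abs. Qed.

Lemma Cnorm_Cmod z : Cnorm z = Cmod z.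
Proof. unfold Cnorm, Cmod, Re, Im. f_equal. ring. Qed.

Lemma Cnorm_triangle z w : Cnorm (Cadd z w) <= Cnorm z + Cnorm w.
Proof. rewrite !Cnorm_Cmod. apply Cmod_triangle. Qed.

Lemma Cnorm_opp z : Cnorm (Copp z) = Cnorm z.
Proof. unfold Cnorm, Copp, Re, Im; simpl. f_equal. ring. Qed.

Lemma Rcpow_eq x z : Rcpow x z =
  (exp (Re z * ln x) * cos (Im z * ln x), exp (Re z * ln x) * sin (Im z * ln x)).
Proof.
  unfold Rcpow, Cexp, Cmul, RtoC, Re, Im; simpl.
  replace (fst z * ln x - snd z * 0) with (fst z * ln x) by ring.
  replace (fst z * 0 + snd z * ln x) with (snd z * ln x) by ring. reflexivity.
Qed.

Lemma Cnorm_Rcpow x z : Cnorm (Rcpow x z) = exp (Re z * ln x).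
Proof.
  rewrite Rcpow_eq. unfold Cnorm, Re, Im; simpl.
  set (e := exp _). set (t := snd z * ln x).
  replace (e * cos t * (e * cos t) + e * sin t * (e * sin t)) with (e * e * (Rsqr (sin t) + Rsqr (cos t))) by (unfold Rsqr; ring).
  rewrite (sin2_cos2 t), Rmult_1_r. apply sqrt_square. unfold e; left; apply exp_pos.
Qed.

Lemma Rcpow_real x r : Rcpow x (r, 0) = (exp (r * ln x), 0).
Proof.
  rewrite Rcpow_eq. unfold Re, Im; simpl. rewrite Rmult_0_l, cos_0, sin_0. f_equal; ring.
Qed.

Lemma Rcpow_add x z w : Rcpow x (Cadd z w) = Cmul (Rcpow x z) (Rcpow x w).
Proof.
  rewrite !Rcpow_eq. unfold Cadd, Cmul, Re, Im; simpl.
  replace ((fst z + fst w) * ln x) with (fst z * ln x + fst w * ln x) by ring.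
  replace ((snd z + snd w) * ln x) with (snd z * ln x + snd w * ln x) by ring.
  rewrite exp_plus, cos_plus, sin_plus. f_equal; ring.
Qed.

Lemma Rcpow_mulbase x y z : 0 < x -> 0 < y -> Rcpow (x * y) z = Cmul (Rcpow x z) (Rcpow y z).
Proof.
  intros Hx Hy. rewrite !Rcpow_eq. rewrite ln_mult by auto. unfold Cmul, Re, Im; simpl.
  replace (fst z * (ln x + ln y)) with (fst z * ln x + fst z * ln y) by ring.
  replace (snd z * (ln x + ln y)) with (snd z * ln x + snd z * ln y) by ring.
  rewrite exp_plus, cos_plus, sin_plus. f_equal; ring.
Qed.
Lemma is_series_lim (a : nat -> R) l :
  is_series a l <-> is_lim_seq (fun N => sum_f_R0 a N) l.
Proof.
  split; intro H.
  - apply is_lim_seq_ext with (u := sum_n a). intro; apply sum_n_Reals. exact H.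
  - apply is_lim_seq_ext with (v := sum_n a) in H. exact H. intro; symmetry; apply sum_n_Reals.
Qed.

Lemma ex_series_tail (a : nat -> R) n : ex_series a -> ex_series (fun k => a (n + k)%nat).
Proof. intro H. apply ex_series_incr_n. exact H. Qed.

Lemma Series_ge0 (a : nat -> R) : ex_series a -> (forall n, 0 <= a n) -> 0 <= Series a.
Proof.
  intros Ha H. pose proof (Series_correct _ Ha) as L. apply is_series_lim in L.
  assert (Rbar_le 0 (Series a)).
  { eapply is_lim_seq_le. 2: apply is_lim_seq_const. 2: exact L.
    intro n. induction n; simpl; auto. specialize (H (S n)); lra. }
  exact H0.
Qed.

Lemma partial_le_Series (a : nat -> R) N :
  ex_series a -> (forall n, 0 <= a n) -> sum_f_R0 a N <= Series a.
Proof.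
  intros Ha Hp. rewrite (Series_incr_n a (S N)) by (lia || auto). change (Init.Nat.pred (S N)) with N.
  pose proof (Series_ge0 (fun k => a (S N + k)%nat) (ex_series_tail a (S N) Ha) (fun k => Hp _)). 
  lra.
Qed.

Lemma tail_small (a : nat -> R) : ex_series a ->
  forall eps, 0 < eps -> exists N, forall n, (N <= n)%nat -> Rabs (Series (fun k => a (n + k)%nat)) < eps.
Proof.
  intros Ha eps Heps.
  pose proof (Series_correct a Ha) as H. apply is_series_lim in H.
  apply is_lim_seq_Reals in H. destruct (H eps Heps) as [N HN].
  exists (S N). intros n Hn.
  rewrite (Series_incr_n a n) in HN by (lia || auto).
  specialize (HN (pred n) ltac:(lia)). unfold R_dist in HN.
  replace (sum_f_R0 a (Init.Nat.pred n) - (sum_f_R0 a (Init.Nat.pred n) + Series (fun k : nat => a (n + k)%nat)))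
    with (- Series (fun k : nat => a (n + k)%nat)) in HN by ring.
  rewrite Rabs_Ropp in HN. exact HN.
Qed.


Lemma Series_tail_eq (a : nat -> R) n : ex_series a ->
  Series (fun k => a (n + k)%nat) = Series a - sum_f_R0 a (pred n) \/ n = O.
Proof.
  intro H. destruct n. right; reflexivity. left.
  rewrite (Series_incr_n a (S n)) by (lia || auto). ring.
Qed.

Lemma ex_series_le_R (a b : nat -> R) : (forall n, Rabs (a n) <= b n) -> ex_series b -> ex_series a.
Proof. intros H Hb. apply (ex_series_le a b); auto. Qed.

Lemma Series_le_gen (a b : nat -> R) : (forall n, a n <= b n) -> ex_series a -> ex_series b -> Series a <= Series b.
Proof.
  intros H Ha Hb. 
  assert (0 <= Series (fun n => b n - a n)). { apply Series_ge0. apply (ex_series_minus b a); auto. intro n; specialize (H n); lra. }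
  rewrite Series_minus in H0 by auto. lra.
Qed.

Lemma Series_abs_le (a b : nat -> R) : (forall n, Rabs (a n) <= b n) -> ex_series b -> Rabs (Series a) <= Series b.
Proof.
  intros H Hb.
  assert (Ha : ex_series a) by (apply (ex_series_le_R a b); auto).
  assert (Ha' : ex_series (fun n => - a n)).
  { apply (ex_series_le_R _ b); auto. intro n; rewrite Rabs_Ropp; auto. }
  apply Rabs_le. split.
  - assert (Series (fun n => - a n) <= Series b).
    { apply Series_le_gen; auto. intro n; specialize (H n). rewrite <- Rabs_Ropp in H. eapply Rle_trans. apply RRle_abs. auto. }
    rewrite Series_opp in H0. lra.
  - apply Series_le_gen; auto. intro n; specialize (H n). eapply Rle_trans. apply RRle_abs. auto.
Qed.

Lemma is_series_scal_R (a : nat -> R) l c : is_series a l -> is_series (fun n => c * a n) (c * l).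
Proof. intro H. apply (is_series_scal c a l H). Qed.

Definition CS (u : nat -> Cpx) (l : Cpx) : Prop :=
  is_series (fun n => Re (u n)) (Re l) /\ is_series (fun n => Im (u n)) (Im l).

Lemma CS_Cseries_cv u l : CS u l -> Cseries_cv u l.
Proof.
  intros [H1 H2]. apply is_series_lim, is_lim_seq_Reals in H1. apply is_series_lim, is_lim_seq_Reals in H2.
  split; auto.
Qed.

Lemma Cseries_cv_CS u l : Cseries_cv u l -> CS u l.
Proof.
  intros [H1 H2]. split; apply is_series_lim, is_lim_seq_Reals; auto.
Qed.

Lemma CS_unique u l l' : CS u l -> CS u l' -> l = l'.
Proof.
  intros [H1 H2] [H3 H4]. apply Cpx_eq.
  - apply is_series_unique in H1. apply is_series_unique in H3. congruence.
  - apply is_series_unique in H2. apply is_series_unique in H4. congruence.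
Qed.

Lemma Cseries_eq u l : CS u l -> Cseries u = l.
Proof.
  intro H. unfold Cseries.
  assert (Ex : exists l0, Cseries_cv u l0) by (exists l; apply CS_Cseries_cv; auto).
  pose proof (epsilon_spec (inhabits (0,0)) _ Ex) as H'.
  apply Cseries_cv_CS in H'. eapply CS_unique; eauto.
Qed.

Lemma CS_ext u v l : (forall n, u n = v n) -> CS u l -> CS v l.
Proof.
  intros E [H1 H2]; split; eapply is_series_ext; try eassumption; intro n; simpl; rewrite E; reflexivity.
Qed.

Lemma CS_plus u v lu lv : CS u lu -> CS v lv -> CS (fun n => Cadd (u n) (v n)) (Cadd lu lv).
Proof.
  intros [H1 H2] [H3 H4]; split; unfold Cadd, Re, Im in *; simpl;
  [apply (is_series_plus _ _ _ _ H1 H3) | apply (is_series_plus _ _ _ _ H2 H4)].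
Qed.

Lemma is_series_lin (a b : nat -> R) la lb (x y : R) : is_series a la -> is_series b lb ->
  is_series (fun n => x * a n + y * b n) (x * la + y * lb).
Proof.
  intros Ha Hb. apply (is_series_plus (fun n => x * a n) (fun n => y * b n)).
  apply (is_series_scal x a la Ha). apply (is_series_scal y b lb Hb).
Qed.

Lemma CS_scal c u l : CS u l -> CS (fun n => Cmul c (u n)) (Cmul c l).
Proof.
  intros [H1 H2]; split; unfold Cmul, Re, Im in *; simpl.
  - replace (fst c * fst l - snd c * snd l) with (fst c * fst l + - snd c * snd l) by ring.
    eapply is_series_ext. 2: apply (is_series_lin _ _ _ _ (fst c) (- snd c) H1 H2). intro; simpl; ring.
  - replace (fst c * snd l + snd c * fst l) with (fst c * snd l + snd c * fst l) by ring.
    eapply is_series_ext. 2: apply (is_series_lin _ _ _ _ (fst c) (snd c) H2 H1). intro; simpl; ring.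
Qed.

Lemma CS_scal_r c u l : CS u l -> CS (fun n => Cmul (u n) c) (Cmul l c).
Proof.
  intro H. apply (CS_ext (fun n => Cmul c (u n))). intro n; apply Cpx_eq; unfold Cmul, Re, Im; simpl; ring.
  replace (Cmul l c) with (Cmul c l) by (apply Cpx_eq; unfold Cmul, Re, Im; simpl; ring).
  apply CS_scal; auto.
Qed.

Lemma CS_minus u v lu lv : CS u lu -> CS v lv -> CS (fun n => Cadd (u n) (Copp (v n))) (Cadd lu (Copp lv)).
Proof.
  intros Hu Hv. apply CS_plus; auto.
  apply (CS_ext (fun n => Cmul (RtoC (-1)) (v n))). intro n; apply Cpx_eq; unfold Cmul, Copp, RtoC, Re, Im; simpl; ring.
  replace (Copp lv) with (Cmul (RtoC (-1)) lv) by (apply Cpx_eq; unfold Cmul, Copp, RtoC, Re, Im; simpl; ring).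
  apply CS_scal; auto.
Qed.

Lemma Csum_S u N : Csum u (S N) = Cadd (Csum u N) (u (S N)).
Proof. reflexivity. Qed.

Lemma Cnorm_Csum_le u N : Cnorm (Csum u N) <= sum_f_R0 (fun n => Cnorm (u n)) N.
Proof.
  induction N.
  - simpl. unfold Csum; simpl. destruct (u O); apply Req_le; reflexivity.
  - rewrite Csum_S. simpl. eapply Rle_trans. apply Cnorm_triangle. lra.
Qed.

Lemma Cnorm_le_of_sq z M : 0 <= M -> Re z * Re z + Im z * Im z <= M * M -> Cnorm z <= M.
Proof.
  intros HM H. unfold Cnorm. rewrite <- (sqrt_square M HM). apply sqrt_le_1_alt. exact H.
Qed.

Lemma CS_abs u : ex_series (fun n => Cnorm (u n)) ->
  exists l, CS u l /\ Cnorm l <= Series (fun n => Cnorm (u n)).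
Proof.
  intros H.
  assert (E1 : ex_series (fun n => Re (u n))).
  { apply (ex_series_le_R _ _ (fun n => Re_le_Cnorm (u n)) H). }
  assert (E2 : ex_series (fun n => Im (u n))).
  { apply (ex_series_le_R _ _ (fun n => Im_le_Cnorm (u n)) H). }
  exists (Series (fun n => Re (u n)), Series (fun n => Im (u n))).
  split. split; apply Series_correct; auto.
  set (M := Series (fun n => Cnorm (u n))).
  assert (HM : 0 <= M) by (apply Series_ge0; auto; intro; apply Cnorm_ge0).
  apply Cnorm_le_of_sq; auto. unfold Re at 1 2, Im at 3 4; simpl.
  pose proof (Series_correct _ E1) as L1. apply is_series_lim in L1.
  pose proof (Series_correct _ E2) as L2. apply is_series_lim in L2.
  pose proof (is_lim_seq_plus' _ _ _ _ (is_lim_seq_mult' _ _ _ _ L1 L1) (is_lim_seq_mult' _ _ _ _ L2 L2)) as L.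
  assert (Rbar_le (Series (fun n => Re (u n)) * Series (fun n => Re (u n)) + Series (fun n => Im (u n)) * Series (fun n => Im (u n))) (M * M)).
  { eapply is_lim_seq_le. 2: exact L. 2: apply is_lim_seq_const.
    intro N. simpl.
    pose proof (Cnorm_Csum_le u N) as HN.
    pose proof (partial_le_Series (fun n => Cnorm (u n)) N H (fun n => Cnorm_ge0 _)) as HN2.
    fold M in HN2.
    assert (Cnorm (Csum u N) <= M) by lra.
    assert (0 <= Cnorm (Csum u N)) by apply Cnorm_ge0.
    assert (Cnorm (Csum u N) * Cnorm (Csum u N) <= M * M) by nra.
    unfold Cnorm in H2. rewrite sqrt_sqrt in H2.
    unfold Csum, Re, Im in H2; simpl in H2. exact H2.
    unfold Csum, Re, Im; simpl; nra. }
  simpl in H0. exact H0.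
Qed.
Lemma finite_sum_lim (u : nat -> nat -> R) K :
  (forall k, is_lim_seq (fun m => u m k) 0) -> is_lim_seq (fun m => sum_f_R0 (u m) K) 0.
Proof.
  intro H. induction K.
  - simpl. apply H.
  - simpl. replace (Finite 0) with (Finite (0 + 0)) by (f_equal; ring).
    apply is_lim_seq_plus'; auto.
Qed.

Lemma tannery (u : nat -> nat -> R) (M : nat -> R) :
  (forall m k, 0 <= u m k <= M k) -> ex_series M -> (forall k, is_lim_seq (fun m => u m k) 0) ->
  is_lim_seq (fun m => Series (u m)) 0.
Proof.
  intros Hb HM Hl. apply is_lim_seq_Reals. intros eps Heps.
  destruct (tail_small M HM (eps/2) ltac:(lra)) as [K HK].
  specialize (HK (S K) ltac:(lia)).
  pose proof (finite_sum_lim u K Hl) as F. apply is_lim_seq_Reals in F.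
  destruct (F (eps/2) ltac:(lra)) as [N HN]. exists N. intros m Hm.
  specialize (HN m Hm). unfold R_dist in *. rewrite Rminus_0_r in *.
  assert (Em : ex_series (u m)).
  { apply (ex_series_le_R _ M); auto. intro k; rewrite Rabs_right; [apply Hb | apply Rle_ge, Hb]. }
  rewrite (Series_incr_n (u m) (S K)) by (lia || auto). change (Init.Nat.pred (S K)) with K.
  assert (T1 : 0 <= Series (fun k => u m (S K + k)%nat)).
  { apply Series_ge0. apply ex_series_tail; auto. intro; apply Hb. }
  assert (T2 : Series (fun k => u m (S K + k)%nat) <= Series (fun k => M (S K + k)%nat)).
  { apply Series_le. intro; apply Hb. apply ex_series_tail; auto. }
  assert (S0 : 0 <= sum_f_R0 (u m) K).
  { clear -Hb. induction K; simpl. apply Hb. pose proof (Hb m (S K)); lra. }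
  rewrite Rabs_right in HN by lra.
  pose proof (Rle_abs (Series (fun k : nat => M (S K + k)%nat))).
  rewrite Rabs_right by lra. lra.
Qed.

Lemma is_series_finsum (b : nat -> nat -> R) r J :
  (forall j, is_series (fun k => b j k) (r j)) ->
  is_series (fun k => sum_f_R0 (fun j => b j k) J) (sum_f_R0 r J).
Proof.
  intro H. induction J; simpl. apply H.
  apply (is_series_plus _ _ _ _ IHJ (H (S J))).
Qed.

Lemma fubini_R (b : nat -> nat -> R) (B : nat -> R) r c :
  (forall k, ex_series (fun j => Rabs (b j k))) ->
  (forall k, Series (fun j => Rabs (b j k)) <= B k) -> ex_series B ->
  (forall j, is_series (fun k => b j k) (r j)) ->
  (forall k, is_series (fun j => b j k) (c k)) ->
  is_series r (Series c) /\ ex_series c.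
Proof.
  intros Hab HB HBe Hr Hc.
  assert (Hck : forall k, Rabs (c k) <= B k).
  { intro k. rewrite <- (is_series_unique _ _ (Hc k)). eapply Rle_trans. apply Series_abs_le.
    2: apply Hab. intro; apply Rle_refl. apply HB. }
  assert (Ec : ex_series c) by (apply (ex_series_le_R c B); auto).
  split; auto.
  set (T := fun J k => Series (fun i => Rabs (b (S J + i)%nat k))).
  assert (HT0 : forall J k, 0 <= T J k <= B k).
  { intros J k. unfold T. split. apply Series_ge0. apply (ex_series_tail (fun j => Rabs (b j k))); auto.
    intro; apply Rabs_pos.
    eapply Rle_trans. 2: apply HB.
    rewrite (Series_incr_n (fun j => Rabs (b j k)) (S J)) by (lia || auto).
    assert (0 <= sum_f_R0 (fun j => Rabs (b j k)) (Init.Nat.pred (S J))).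
    { clear. induction J; simpl. apply Rabs_pos. pose proof (Rabs_pos (b (S J) k)). simpl in IHJ. lra. }
    lra. }
  assert (HTl : forall k, is_lim_seq (fun J => T J k) 0).
  { intro k. apply is_lim_seq_Reals. intros eps Heps.
    destruct (tail_small _ (Hab k) eps Heps) as [N HN]. exists N. intros J HJ.
    unfold R_dist, T. rewrite Rminus_0_r. apply HN. lia. }
  pose proof (tannery T B HT0 HBe HTl) as Tl.
  apply is_series_lim. apply is_lim_seq_Reals. apply is_lim_seq_Reals in Tl.
  intros eps Heps. destruct (Tl eps Heps) as [N HN]. exists N. intros J HJ.
  specialize (HN J HJ). unfold R_dist in *. rewrite Rminus_0_r in HN.
  pose proof (is_series_finsum b r J Hr) as FS.
  assert (ET : ex_series (T J)) by (apply (ex_series_le_R _ B); auto; intro k; rewrite Rabs_right; apply HT0 || apply Rle_ge, HT0).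
  assert (Diff : forall k, Rabs (sum_f_R0 (fun j => b j k) J - c k) <= T J k).
  { intro k. unfold T.
    rewrite <- (is_series_unique _ _ (Hc k)).
    assert (Ek : ex_series (fun j => b j k)) by (exists (c k); auto).
    rewrite (Series_incr_n (fun j => b j k) (S J)) by (lia || auto). change (Init.Nat.pred (S J)) with J.
    replace (sum_f_R0 (fun j : nat => b j k) J - (sum_f_R0 (fun j : nat => b j k) J + Series (fun k0 : nat => b (S J + k0)%nat k)))
      with (- Series (fun k0 : nat => b (S J + k0)%nat k)) by ring.
    rewrite Rabs_Ropp. apply Series_abs_le. intro; apply Rle_refl.
    apply (ex_series_tail (fun j => Rabs (b j k))); auto. }
  rewrite <- (is_series_unique _ _ FS).
  rewrite <- Series_minus. 2: exists (sum_f_R0 r J); auto. 2: auto.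
  rewrite Rabs_right in HN by (apply Rle_ge, Series_ge0; auto; intro; apply HT0).
  eapply Rle_lt_trans. 2: exact HN. apply Series_abs_le; auto.
Qed.

Lemma fubini_C (b : nat -> nat -> Cpx) (B : nat -> R) r c :
  (forall k, ex_series (fun j => Cnorm (b j k))) ->
  (forall k, Series (fun j => Cnorm (b j k)) <= B k) -> ex_series B ->
  (forall j, CS (fun k => b j k) (r j)) ->
  (forall k, CS (fun j => b j k) (c k)) ->
  exists L, CS r L /\ CS c L.
Proof.
  intros Hab HB HBe Hr Hc.
  assert (G : forall (f : Cpx -> R), (forall z, Rabs (f z) <= Cnorm z) ->
     forall k, ex_series (fun j => Rabs (f (b j k))) /\ Series (fun j => Rabs (f (b j k))) <= B k).
  { intros f Hf k.
    assert (E : ex_series (fun j => Rabs (f (b j k)))).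
    { apply (ex_series_le_R _ (fun j => Cnorm (b j k))); auto. intro; rewrite Rabs_Rabsolu; auto. }
    split; auto. eapply Rle_trans. 2: apply HB. apply Series_le; auto. intro; split; auto. apply Rabs_pos. }
  destruct (fubini_R (fun j k => Re (b j k)) B (fun j => Re (r j)) (fun k => Re (c k))) as [F1 E1].
  - intro k; apply (G Re Re_le_Cnorm k).
  - intro k; apply (G Re Re_le_Cnorm k).
  - auto.
  - intro j; apply Hr.
  - intro k; apply Hc.
  - destruct (fubini_R (fun j k => Im (b j k)) B (fun j => Im (r j)) (fun k => Im (c k))) as [F2 E2].
    + intro k; apply (G Im Im_le_Cnorm k).
    + intro k; apply (G Im Im_le_Cnorm k).
    + auto.
    + intro j; apply Hr.
    + intro k; apply Hc.
    + exists (Series (fun k => Re (c k)), Series (fun k => Im (c k))).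
      split; split; auto; apply Series_correct; auto.
Qed.
Definition phi (y : R) : R := y * exp (- y).
Definition lam (c : R) (k : nat) : R := exp (- c * ln (INR (S k))).

Lemma lam_pos c k : 0 < lam c k.
Proof. apply exp_pos. Qed.



Lemma exp_le x y : x <= y -> exp x <= exp y.
Proof. intro H. destruct (Rle_lt_or_eq_dec _ _ H). left; apply exp_increasing; auto. subst; lra. Qed.

Lemma pow_le1 x n : 0 <= x <= 1 -> x ^ n <= 1.
Proof. intro H. rewrite <- (pow1 n). apply pow_incr. lra. Qed.

Lemma ln_INR_S_ge0 k : 0 <= ln (INR (S k)).
Proof.
  rewrite <- ln_1. destruct k. simpl; lra.
  left. apply ln_increasing. lra. rewrite S_INR. pose proof (lt_0_INR (S k) ltac:(lia)). lra.
Qed.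

Lemma lam_le1 c k : 0 <= c -> lam c k <= 1.
Proof.
  intro Hc. unfold lam. rewrite <- exp_0. pose proof (ln_INR_S_ge0 k).
  apply exp_le. nra.
Qed.

Lemma exp_INR_mul n x : exp (INR n * x) = exp x ^ n.
Proof.
  induction n. simpl. rewrite Rmult_0_l; apply exp_0.
  rewrite S_INR. replace ((INR n + 1) * x) with (INR n * x + x) by ring.
  rewrite exp_plus, IHn. simpl. ring.
Qed.

Lemma exp_series y : is_series (fun i => / INR (fact i) * y ^ i) (exp y).
Proof.
  apply is_series_Reals. unfold exp. destruct (exist_exp y) as [l Hl]. simpl. exact Hl.
Qed.

Definition coef (x : R) (j : nat) : R := (-1) ^ (S j + 1) * x ^ (S j) / INR (fact (S j - 1)).

Lemma coef_eq x j : coef x j = (-1) ^ j * x ^ (S j) / INR (fact j).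
Proof.
  unfold coef. replace (S j - 1)%nat with j by lia. replace (S j + 1)%nat with (S (S j)) by lia.
  simpl. field. apply INR_fact_neq_0.
Qed.

Lemma phi_series x l : is_series (fun j => coef x j * l ^ (S j)) (phi (x * l)).
Proof.
  unfold phi. pose proof (exp_series (- (x * l))) as H.
  pose proof (is_series_scal (x * l) _ _ H) as H2.
  eapply is_series_ext. 2: exact H2. intro j. simpl. rewrite coef_eq.
  unfold scal; simpl; unfold mult; simpl.
  replace (- (x * l)) with ((-1) * (x * l)) by ring. rewrite Rpow_mult_distr. rewrite Rpow_mult_distr.
  simpl. field. apply INR_fact_neq_0.
Qed.

Lemma phi_abs_series x l : 0 <= x -> 0 <= l ->
  is_series (fun j => Rabs (coef x j) * l ^ (S j)) (x * l * exp (x * l)).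
Proof.
  intros Hx Hl. pose proof (exp_series (x * l)) as H.
  pose proof (is_series_scal (x * l) _ _ H) as H2.
  eapply is_series_ext. 2: exact H2. intro j. simpl. rewrite coef_eq.
  unfold scal; simpl; unfold mult; simpl.
  unfold Rdiv. rewrite !Rabs_mult. rewrite Rabs_Rinv by apply INR_fact_neq_0.
  rewrite pow_1_abs. rewrite (Rabs_right (INR (fact j))) by (apply Rle_ge, pos_INR).
  rewrite (Rabs_right x) by lra. rewrite (Rabs_right (x ^ j)) by (apply Rle_ge, pow_le; auto).
  rewrite Rpow_mult_distr. ring.
Qed.

Lemma Rcpow_real_neg N r : Rcpow N (Copp (RtoC r)) = RtoC (exp (- r * ln N)).
Proof.
  rewrite Rcpow_eq. unfold Copp, RtoC, Re, Im; simpl.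
  replace (-0 * ln N) with 0 by ring. rewrite cos_0, sin_0. apply Cpx_eq; unfold Re, Im; simpl; ring.
Qed.

Lemma dirichlet_real_pt (a : nat -> Cpx) c j D :
  CS (fun k => Cmul (a (S k)) (RtoC (lam c k ^ (S j)))) D ->
  dirichlet a (RtoC (c * INR (S j))) = D.
Proof.
  intro H. unfold dirichlet. apply Cseries_eq. eapply CS_ext. 2: exact H.
  intro k. rewrite Rcpow_real_neg. f_equal. f_equal. unfold lam.
  rewrite <- exp_INR_mul. f_equal. ring.
Qed.

Lemma Rc_expand (a : nat -> Cpx) c x : 0 < c -> 0 <= x ->
  ex_series (fun k => Cnorm (a (S k)) * lam c k) ->
  CS (fun k => Cmul (a (S k)) (RtoC (phi (x * lam c k)))) (Rc a c x).
Proof.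
  intros Hc Hx Hser.
  set (A := fun k => a (S k)). set (l := lam c).
  set (b := fun j k => Cmul (RtoC (coef x j)) (Cmul (A k) (RtoC (l k ^ (S j))))).
  assert (Hl0 : forall k, 0 < l k) by (intro; apply lam_pos).
  assert (Hl1 : forall k, l k <= 1) by (intro; apply lam_le1; lra).
  assert (HD : forall j, exists D, CS (fun k => Cmul (A k) (RtoC (l k ^ (S j)))) D).
  { intro j. destruct (CS_abs (fun k => Cmul (A k) (RtoC (l k ^ (S j))))) as [D [HD _]].
    - apply (ex_series_le_R _ (fun k => Cnorm (a (S k)) * lam c k)); auto.
      intro k. rewrite Rabs_right by (apply Rle_ge, Cnorm_ge0).
      rewrite Cnorm_mul, Cnorm_RtoC. apply Rmult_le_compat_l. apply Cnorm_ge0.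
      rewrite Rabs_right by (apply Rle_ge, pow_le; left; auto).
      specialize (Hl0 k). specialize (Hl1 k). assert (H1 : l k ^ j <= 1) by (apply pow_le1; lra).
      simpl. fold l. nra.
    - exists D; exact HD. }
  set (Df := fun j => Cseries (fun k => Cmul (A k) (RtoC (l k ^ (S j))))).
  assert (HDf : forall j, CS (fun k => Cmul (A k) (RtoC (l k ^ (S j)))) (Df j)).
  { intro j. destruct (HD j) as [D HDj]. unfold Df. rewrite (Cseries_eq _ _ HDj). exact HDj. }
  set (B := fun k => Cnorm (A k) * l k * (x * exp x)).
  destruct (fubini_C b B (fun j => Cmul (RtoC (coef x j)) (Df j))
              (fun k => Cmul (A k) (RtoC (phi (x * l k))))) as [L [HL1 HL2]].
  - intro k. apply (ex_series_le_R _ (fun j => Cnorm (A k) * (Rabs (coef x j) * l k ^ S j))).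
    + intro j. unfold b. rewrite Rabs_right by (apply Rle_ge, Cnorm_ge0).
      rewrite !Cnorm_mul, !Cnorm_RtoC. rewrite (Rabs_right (l k ^ S j)) by (apply Rle_ge, pow_le; left; auto).
      right; ring.
    + exists (Cnorm (A k) * (x * l k * exp (x * l k))). apply is_series_scal_R.
      apply phi_abs_series; auto. left; auto.
  - intro k. 
    assert (E : Series (fun j => Cnorm (b j k)) = Cnorm (A k) * (x * l k * exp (x * l k))).
    { apply is_series_unique. eapply is_series_ext.
      2: apply (is_series_scal_R _ _ (Cnorm (A k)) (phi_abs_series x (l k) Hx (Rlt_le _ _ (Hl0 k)))).
      intro j. unfold b. rewrite !Cnorm_mul, !Cnorm_RtoC. rewrite (Rabs_right (l k ^ S j)) by (apply Rle_ge, pow_le; left; auto).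
      simpl. ring. }
    rewrite E. unfold B. 
    assert (exp (x * l k) <= exp x) by (apply exp_le; specialize (Hl1 k); specialize (Hl0 k); nra).
    pose proof (Cnorm_ge0 (A k)). specialize (Hl0 k). 
    assert (0 <= x * l k) by nra. assert (0 <= exp (x * l k)) by (left; apply exp_pos).
    assert (x * l k * exp (x * l k) <= l k * (x * exp x)) by nra. nra.
  - unfold B. apply (ex_series_scal_r (x * exp x) (fun k => Cnorm (A k) * l k)). exact Hser.
  - intro j. unfold b. apply CS_scal. apply HDf.
  - intro k. eapply CS_ext. 2: apply (CS_scal (A k) (fun j => RtoC (coef x j * l k ^ S j)) (RtoC (phi (x * l k)))).
    2: { split. apply (phi_series x (l k)). unfold RtoC, Im; simpl. apply is_series_lim.
         eapply is_lim_seq_ext. 2: apply is_lim_seq_const. intro N. induction N; simpl; auto. rewrite <- IHN; ring. }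
    intro j. unfold b. apply Cpx_eq; unfold Cmul, RtoC, Re, Im; simpl; ring.
  - assert (E : Rc a c x = L).
    { unfold Rc. apply Cseries_eq. eapply CS_ext. 2: exact HL1.
      intro j. simpl. f_equal. symmetry. apply dirichlet_real_pt. apply HDf. }
    rewrite E. exact HL2.
Qed.
Lemma isR_scal (f : R -> R) a b v k : is_RInt f a b v -> is_RInt (fun x => k * f x) a b (k * v).
Proof. intro H. apply (is_RInt_scal f a b k v H). Qed.

Lemma isR_plus (f g : R -> R) a b v w : is_RInt f a b v -> is_RInt g a b w -> is_RInt (fun x => f x + g x) a b (v + w).
Proof. intros H1 H2. apply (is_RInt_plus f g a b v w H1 H2). Qed.

Lemma isR_minus (f g : R -> R) a b v w : is_RInt f a b v -> is_RInt g a b w -> is_RInt (fun x => f x - g x) a b (v - w).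
Proof. intros H1 H2. apply (is_RInt_minus f g a b v w H1 H2). Qed.

Lemma isR_const a b c : is_RInt (fun _ => c) a b (c * (b - a)).
Proof. replace (c * (b - a)) with (scal (b - a) c). apply is_RInt_const. unfold scal; simpl; unfold mult; simpl; ring. Qed.

Lemma isR_unique (f : R -> R) a b v w : is_RInt f a b v -> is_RInt f a b w -> v = w.
Proof. intros H1 H2. rewrite <- (is_RInt_unique f a b v H1). apply is_RInt_unique; auto. Qed.

Lemma isR_le (f g : R -> R) a b v w : a <= b -> is_RInt f a b v -> is_RInt g a b w ->
  (forall x, a <= x <= b -> f x <= g x) -> v <= w.
Proof. intros. apply (is_RInt_le f g a b v w); auto. intros; apply H2; lra. Qed.

Lemma isR_opp (f : R -> R) a b v : is_RInt f a b v -> is_RInt (fun x => - f x) a b (- v).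
Proof.
  intro H. pose proof (isR_scal f a b v (-1) H) as H'.
  replace (- v) with ((-1) * v) by ring. eapply is_RInt_ext. 2: exact H'. intros; simpl; ring.
Qed.

Lemma isR_abs_le (f F : R -> R) a b v w : a <= b -> is_RInt f a b v -> is_RInt F a b w ->
  (forall x, a <= x <= b -> Rabs (f x) <= F x) -> Rabs v <= w.
Proof.
  intros Hab Hf HF H. apply Rabs_le. split.
  - assert (- w <= v).
    { apply (isR_le (fun x => - F x) f a b (- w) v Hab (isR_opp _ _ _ _ HF) Hf).
      intros x Hx; specialize (H x Hx). assert (- f x <= Rabs (f x)) by (rewrite <- Rabs_Ropp; apply RRle_abs). cbv beta. lra. }
    lra.
  - apply (isR_le f F a b); auto. intros x Hx; specialize (H x Hx). eapply Rle_trans. apply RRle_abs. auto.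
Qed.

Lemma isR_bound (f : R -> R) a b v M : a <= b -> is_RInt f a b v ->
  (forall x, a <= x <= b -> Rabs (f x) <= M) -> Rabs v <= M * (b - a).
Proof.
  intros Hab Hf H. apply (isR_abs_le f (fun _ => M) a b); auto. apply isR_const.
Qed.

Lemma RInt_is_of (f : R -> R) a b v : is_RInt f a b v -> RInt_is f a b v.
Proof.
  intro H. assert (E : ex_RInt f a b) by (exists v; auto).
  exists (ex_RInt_Reals_0 f a b E). rewrite <- RInt_Reals. apply is_RInt_unique; auto.
Qed.

Lemma RInt_is_to (f : R -> R) a b v : RInt_is f a b v -> is_RInt f a b v.
Proof. intros [pr <-]. apply ex_RInt_Reals_aux_1. Qed.

Definition CI (g : R -> Cpx) (a b : R) (v : Cpx) : Prop :=
  is_RInt (fun x => Re (g x)) a b (Re v) /\ is_RInt (fun x => Im (g x)) a b (Im v).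

Lemma CI_unique g a b v w : CI g a b v -> CI g a b w -> v = w.
Proof. intros [H1 H2] [H3 H4]. apply Cpx_eq; eapply isR_unique; eauto. Qed.

Lemma CI_ext g h a b v : (forall x, Rmin a b <= x <= Rmax a b -> g x = h x) -> CI g a b v -> CI h a b v.
Proof.
  intros E [H1 H2]. split; eapply is_RInt_ext; try eassumption; intros x Hx; cbv beta; rewrite E; auto; lra.
Qed.

Lemma CI_scal c g a b v : CI g a b v -> CI (fun x => Cmul c (g x)) a b (Cmul c v).
Proof.
  intros [H1 H2]. unfold Cmul, Re, Im in *; simpl in *. split; simpl.
  - apply isR_minus; apply isR_scal; auto.
  - apply isR_plus; apply isR_scal; auto.
Qed.

Lemma CI_plus g h a b v w : CI g a b v -> CI h a b w -> CI (fun x => Cadd (g x) (h x)) a b (Cadd v w).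
Proof. intros [H1 H2] [H3 H4]. split; simpl; apply isR_plus; auto. Qed.

Lemma CI_minus g h a b v w : CI g a b v -> CI h a b w -> CI (fun x => Cadd (g x) (Copp (h x))) a b (Cadd v (Copp w)).
Proof. intros [H1 H2] [H3 H4]. split; simpl; apply isR_minus; auto. Qed.

Lemma CI_comp_lin g u a b v : CI g (u * a) (u * b) v -> CI (fun y => Cmul (RtoC u) (g (u * y))) a b v.
Proof.
  intros [H1 H2]. split.
  - rewrite <- (Rplus_0_r (u * a)), <- (Rplus_0_r (u * b)) in H1.
    pose proof (is_RInt_comp_lin _ u 0 a b _ H1) as H. eapply is_RInt_ext. 2: exact H.
    intros x _. unfold Cmul, RtoC, Re, Im; simpl. unfold scal; simpl; unfold mult; simpl. rewrite Rplus_0_r. ring.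
  - rewrite <- (Rplus_0_r (u * a)), <- (Rplus_0_r (u * b)) in H2.
    pose proof (is_RInt_comp_lin _ u 0 a b _ H2) as H. eapply is_RInt_ext. 2: exact H.
    intros x _. unfold Cmul, RtoC, Re, Im; simpl. unfold scal; simpl; unfold mult; simpl. rewrite Rplus_0_r. ring.
Qed.

Lemma CI_finsum (g : nat -> R -> Cpx) a b (v : nat -> Cpx) N :
  (forall n, CI (g n) a b (v n)) -> CI (fun x => Csum (fun n => g n x) N) a b (Csum v N).
Proof.
  intro H. induction N.
  - unfold Csum; simpl. destruct (H O) as [H1 H2]. split; auto.
  - destruct IHN as [I1 I2]. destruct (H (S N)) as [H1 H2]. split; simpl; apply isR_plus; auto.
Qed.
Lemma exists_nat_gt (x : R) : exists n : nat, x < INR n.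
Proof.
  destruct (archimed x) as [H1 H2].
  destruct (Z_lt_le_dec 0 (up x)) as [Hp|Hn].
  - exists (Z.to_nat (up x)). rewrite INR_IZR_INZ. rewrite Z2Nat.id by lia. lra.
  - exists 1%nat. simpl. apply IZR_le in Hn. lra.
Qed.

Definition am (m : nat) : R := / INR (S m).
Definition bm (m : nat) : R := INR (S m).

Lemma am_pos m : 0 < am m.
Proof. unfold am. apply Rinv_0_lt_compat, lt_0_INR; lia. Qed.
Lemma bm_ge1 m : 1 <= bm m.
Proof. unfold bm. rewrite S_INR. pose proof (pos_INR m). lra. Qed.
Lemma am_le1 m : am m <= 1.
Proof. unfold am. pose proof (bm_ge1 m). unfold bm in H. rewrite <- Rinv_1. apply Rinv_le_contravar; lra. Qed.
Lemma am_anti n m : (n <= m)%nat -> am m <= am n.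
Proof. intro H. unfold am. apply Rinv_le_contravar. apply lt_0_INR; lia. apply le_INR; lia. Qed.
Lemma bm_mono n m : (n <= m)%nat -> bm n <= bm m.
Proof. intro H. unfold bm. apply le_INR; lia. Qed.

Lemma am_small a : 0 < a -> exists N, forall m, (N <= m)%nat -> am m < a.
Proof.
  intro Ha. destruct (exists_nat_gt (/ a)) as [N HN]. exists N. intros m Hm.
  unfold am. assert (INR N <= INR (S m)) by (apply le_INR; lia).
  assert (0 < / a) by (apply Rinv_0_lt_compat; auto).
  rewrite <- (Rinv_inv a). apply Rinv_lt_contravar. nra. lra.
Qed.

Lemma bm_big b : exists N, forall m, (N <= m)%nat -> b < bm m.
Proof.
  destruct (exists_nat_gt b) as [N HN]. exists N. intros m Hm. unfold bm.
  assert (INR N <= INR (S m)) by (apply le_INR; lia). lra.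
Qed.

Lemma RChasles (f : R -> R) a b c : ex_RInt f a b -> ex_RInt f b c -> RInt f a b + RInt f b c = RInt f a c.
Proof. intros H1 H2. apply (RInt_Chasles f a b c H1 H2). Qed.

Lemma RInt_correct_R (f : R -> R) a b : ex_RInt f a b -> is_RInt f a b (RInt f a b).
Proof. intro H. apply (RInt_correct f a b H). Qed.

Section Gen.
Variable g : R -> Cpx.
Variable M : R.
Hypothesis Hint : forall a b, 0 < a -> a <= b ->
  ex_RInt (fun x => Re (g x)) a b /\ ex_RInt (fun x => Im (g x)) a b /\ ex_RInt (fun x => Cnorm (g x)) a b.
Hypothesis Hbnd : forall a b, 0 < a -> a <= b -> RInt (fun x => Cnorm (g x)) a b <= M.

Let P a b : R := RInt (fun x => Cnorm (g x)) a b.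

Lemma gen_nest (f : Cpx -> R) (Hf : forall z, Rabs (f z) <= Cnorm z)
  (Hfi : forall a b, 0 < a -> a <= b -> ex_RInt (fun x => f (g x)) a b) a' a b b' :
  0 < a' -> a' <= a -> a <= b -> b <= b' ->
  Rabs (RInt (fun x => f (g x)) a b - RInt (fun x => f (g x)) a' b') <= P a' b' - P a b /\ P a b <= P a' b'.
Proof.
  intros H0 H1 H2 H3.
  assert (Ecs : forall u v, 0 < u -> u <= v -> RInt (fun x => f (g x)) u v = RInt (fun x => f (g x)) u v) by auto.
  assert (C1 : RInt (fun x => f (g x)) a' b' = RInt (fun x => f (g x)) a' a + RInt (fun x => f (g x)) a b + RInt (fun x => f (g x)) b b').
  { rewrite <- (RChasles (fun x => f (g x)) a' b b'); try apply Hfi; try lra.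
    rewrite <- (RChasles (fun x => f (g x)) a' a b); try apply Hfi; try lra; try reflexivity. }
  assert (C2 : P a' b' = P a' a + P a b + P b b').
  { unfold P. rewrite <- (RChasles (fun x => Cnorm (g x)) a' b b'); try apply Hint; try lra.
    rewrite <- (RChasles (fun x => Cnorm (g x)) a' a b); try apply Hint; try lra; try reflexivity. }
  assert (B : forall u v, 0 < u -> u <= v -> Rabs (RInt (fun x => f (g x)) u v) <= P u v /\ 0 <= P u v).
  { intros u v Hu Huv. split.
    - apply (isR_abs_le (fun x => f (g x)) (fun x => Cnorm (g x)) u v); auto.
      apply RInt_correct_R; apply Hfi; auto. apply RInt_correct_R; apply Hint; auto.
    - assert (Z : is_RInt (fun _ => 0) u v 0) by (pose proof (isR_const u v 0) as HH; rewrite Rmult_0_l in HH; exact HH).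
      apply (isR_le (fun _ => 0) (fun x => Cnorm (g x)) u v 0 _ Huv Z).
      apply RInt_correct_R; apply Hint; auto. intros; apply Cnorm_ge0. }
  destruct (B a' a) as [B1 B2]; try lra. destruct (B b b') as [B3 B4]; try lra.
  destruct (B a b) as [B5 B6]; try lra.
  rewrite C1, C2. split.
  - replace (RInt (fun x => f (g x)) a b - (RInt (fun x => f (g x)) a' a + RInt (fun x => f (g x)) a b + RInt (fun x => f (g x)) b b'))
      with (- (RInt (fun x => f (g x)) a' a + RInt (fun x => f (g x)) b b')) by ring.
    rewrite Rabs_Ropp. eapply Rle_trans. apply Rabs_triang. lra.
  - lra.
Qed.

Lemma gen_impint : exists v, ImpInt_abs g v.
Proof.
  set (p := fun m => P (am m) (bm m)).
  set (rr := fun m => RInt (fun x => Re (g x)) (am m) (bm m)).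
  set (ii := fun m => RInt (fun x => Im (g x)) (am m) (bm m)).
  assert (Hab : forall n, am n <= bm n) by (intro n; pose proof (am_le1 n); pose proof (bm_ge1 n); lra).
  assert (Hn : forall n m, (n <= m)%nat -> Rabs (rr n - rr m) <= p m - p n /\ Rabs (ii n - ii m) <= p m - p n /\ p n <= p m).
  { intros n m Hnm.
    destruct (gen_nest Re Re_le_Cnorm (fun a b Ha Hab => proj1 (Hint a b Ha Hab)) (am m) (am n) (bm n) (bm m)) as [X1 X2];
      try apply am_pos; try apply am_anti; try apply bm_mono; auto.
    destruct (gen_nest Im Im_le_Cnorm (fun a b Ha Hab => proj1 (proj2 (Hint a b Ha Hab))) (am m) (am n) (bm n) (bm m)) as [Y1 Y2];
      try apply am_pos; try apply am_anti; try apply bm_mono; auto. }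
  assert (Hd : forall n m, Rabs (rr n - rr m) <= Rabs (p n - p m) /\ Rabs (ii n - ii m) <= Rabs (p n - p m)).
  { intros n m. destruct (le_ge_dec n m) as [Hnm|Hnm].
    - destruct (Hn n m Hnm) as [A1 [A2 A3]]. rewrite (Rabs_minus_sym (p n)). rewrite (Rabs_right (p m - p n)) by lra. lra.
    - destruct (Hn m n Hnm) as [A1 [A2 A3]]. rewrite (Rabs_minus_sym (rr n)), (Rabs_minus_sym (ii n)).
      rewrite (Rabs_right (p n - p m)) by lra. lra. }
  destruct (growing_cv p) as [Pinf HPinf].
  { intro n. apply (Hn n (S n)). lia. }
  { exists M. intros x [i ->]. unfold p, P. apply Hbnd. apply am_pos. auto. }
  pose proof (CV_Cauchy p (exist _ Pinf HPinf)) as Cp.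
  assert (Cr : Cauchy_crit rr).
  { intros eps Heps. destruct (Cp eps Heps) as [N HN]. exists N. intros n m Hn1 Hm1.
    specialize (HN n m Hn1 Hm1). unfold R_dist in *. pose proof (proj1 (Hd n m)). lra. }
  assert (Ci : Cauchy_crit ii).
  { intros eps Heps. destruct (Cp eps Heps) as [N HN]. exists N. intros n m Hn1 Hm1.
    specialize (HN n m Hn1 Hm1). unfold R_dist in *. pose proof (proj2 (Hd n m)). lra. }
  destruct (Stdlib.Reals.Rcomplete.R_complete rr Cr) as [lr Hlr].
  destruct (Stdlib.Reals.Rcomplete.R_complete ii Ci) as [li Hli].
  exists (lr, li). split; [|split].
  - intros a b Ha Hab'. destruct (Hint a b Ha Hab') as [I1 [I2 I3]].
    exists (RInt (fun x => Re (g x)) a b), (RInt (fun x => Im (g x)) a b), (RInt (fun x => Cnorm (g x)) a b).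
    split; [|split]; apply RInt_is_of, RInt_correct_R; auto.
  - exists M. intros a b vn Ha Hab' Hv. apply RInt_is_to in Hv.
    destruct (Hint a b Ha Hab') as [I1 [I2 I3]].
    rewrite <- (isR_unique _ _ _ _ _ (RInt_correct_R _ _ _ I3) Hv). apply Hbnd; auto.
  - intros eps Heps.
    destruct (Cp (eps/2) ltac:(lra)) as [N1 HN1].
    destruct (Hlr (eps/2) ltac:(lra)) as [N2 HN2].
    destruct (Hli (eps/2) ltac:(lra)) as [N3 HN3].
    set (N := max N1 (max N2 N3)).
    exists (am N), (bm N). split. apply am_pos.
    intros a b vr vi Ha Had HbB Hvr Hvi.
    apply RInt_is_to in Hvr. apply RInt_is_to in Hvi.
    destruct (am_small a Ha) as [Na HNa]. destruct (bm_big b) as [Nb HNb].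
    set (m := max N (max Na Nb)).
    assert (Hm1 : am m < a) by (apply HNa; unfold m; lia).
    assert (Hm2 : b < bm m) by (apply HNb; unfold m; lia).
    assert (HNab := Hab N).
    destruct (gen_nest Re Re_le_Cnorm (fun a b Ha Hab => proj1 (Hint a b Ha Hab)) (am m) a b (bm m)) as [X1 X2];
      try apply am_pos; try lra.
    destruct (gen_nest Im Im_le_Cnorm (fun a b Ha Hab => proj1 (proj2 (Hint a b Ha Hab))) (am m) a b (bm m)) as [Y1 Y2];
      try apply am_pos; try lra.
    destruct (gen_nest Re Re_le_Cnorm (fun a b Ha Hab => proj1 (Hint a b Ha Hab)) a (am N) (bm N) b) as [Z1 Z2];
      try lra.
    destruct (Hint a b Ha ltac:(lra)) as [I1 [I2 I3]].
    rewrite (isR_unique _ _ _ _ _ Hvr (RInt_correct_R _ _ _ I1)).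
    rewrite (isR_unique _ _ _ _ _ Hvi (RInt_correct_R _ _ _ I2)).
    assert (HP : R_dist (p N) (p m) < eps/2) by (apply HN1; unfold N, m; lia).
    assert (HR : R_dist (rr m) lr < eps/2) by (apply HN2; unfold N, m; lia).
    assert (HI : R_dist (ii m) li < eps/2) by (apply HN3; unfold N, m; lia).
    unfold R_dist in *. unfold Re at 2, Im at 2; simpl. fold (P a b) in *.
    unfold p in HP. unfold rr in HR. unfold ii in HI.
    rewrite Rabs_minus_sym in HP. 
    pose proof (Rle_abs (P (am m) (bm m) - P (am N) (bm N))).
    split.
    + set (X := RInt (fun x => Re (g x)) a b) in *. set (Y := RInt (fun x => Re (g x)) (am m) (bm m)) in *.
      assert (Rabs (X - lr) <= Rabs (X - Y) + Rabs (Y - lr)) by (replace (X - lr) with ((X - Y) + (Y - lr)) by ring; apply Rabs_triang).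
      lra.
    + set (X := RInt (fun x => Im (g x)) a b) in *. set (Y := RInt (fun x => Im (g x)) (am m) (bm m)) in *.
      assert (Rabs (X - li) <= Rabs (X - Y) + Rabs (Y - li)) by (replace (X - li) with ((X - Y) + (Y - li)) by ring; apply Rabs_triang).
      lra.
Qed.
End Gen.

Lemma zero_of_small x : (forall eps, 0 < eps -> Rabs x < eps) -> x = 0.
Proof.
  intro H. destruct (Req_dec x 0) as [E|E]; auto.
  specialize (H (Rabs x) (Rabs_pos_lt x E)). lra.
Qed.

Lemma impint_unique g v w : ImpInt_abs g v -> ImpInt_abs g w -> v = w.
Proof.
  intros [I1 [_ L1]] [_ [_ L2]].
  assert (K : forall eps, 0 < eps -> Rabs (Re v - Re w) < 2 * eps /\ Rabs (Im v - Im w) < 2 * eps).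
  { intros eps Heps. destruct (L1 eps Heps) as [d1 [B1 [Hd1 H1]]]. destruct (L2 eps Heps) as [d2 [B2 [Hd2 H2]]].
    set (a := Rmin d1 d2 / 2). set (b := Rmax (Rmax B1 B2) a + 1).
    assert (Ha : 0 < a) by (unfold a; assert (0 < Rmin d1 d2) by (apply Rmin_glb_lt; auto); lra).
    assert (Ha1 : a < d1) by (unfold a; pose proof (Rmin_l d1 d2); unfold Rmin in *; destruct (Rle_dec d1 d2); lra).
    assert (Ha2 : a < d2) by (unfold a; pose proof (Rmin_r d1 d2); unfold Rmin in *; destruct (Rle_dec d1 d2); lra).
    assert (Hb1 : B1 < b) by (unfold b; pose proof (Rmax_l (Rmax B1 B2) a); pose proof (Rmax_l B1 B2); lra).
    assert (Hb2 : B2 < b) by (unfold b; pose proof (Rmax_l (Rmax B1 B2) a); pose proof (Rmax_r B1 B2); lra).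
    assert (Hab : a <= b) by (unfold b; pose proof (Rmax_r (Rmax B1 B2) a); lra).
    destruct (I1 a b Ha Hab) as [vr [vi [vn [R1 [R2 R3]]]]].
    destruct (H1 a b vr vi Ha Ha1 Hb1 R1 R2). destruct (H2 a b vr vi Ha Ha2 Hb2 R1 R2).
    split.
    - replace (Re v - Re w) with (- (vr - Re v) + (vr - Re w)) by ring.
      eapply Rle_lt_trans. apply Rabs_triang. rewrite Rabs_Ropp. lra.
    - replace (Im v - Im w) with (- (vi - Im v) + (vi - Im w)) by ring.
      eapply Rle_lt_trans. apply Rabs_triang. rewrite Rabs_Ropp. lra. }
  apply Cpx_eq.
  - assert (Re v - Re w = 0). { apply zero_of_small. intros eps He. replace eps with (2 * (eps/2)) by field. apply K; lra. } lra.
  - assert (Im v - Im w = 0). { apply zero_of_small. intros eps He. replace eps with (2 * (eps/2)) by field. apply K; lra. } lra.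
Qed.

Lemma RInt_is_ext (f h : R -> R) a b v : a <= b -> (forall x, a <= x <= b -> f x = h x) -> RInt_is f a b v -> RInt_is h a b v.
Proof.
  intros Hab E H. apply RInt_is_of. apply RInt_is_to in H. eapply is_RInt_ext. 2: exact H.
  intros x Hx. apply E. unfold Rmin, Rmax in Hx; destruct (Rle_dec a b); lra.
Qed.

Lemma impint_ext g h v : (forall x, 0 < x -> g x = h x) -> ImpInt_abs g v -> ImpInt_abs h v.
Proof.
  intros E [I1 [[M HM] L]].
  assert (E' : forall a b (f : Cpx -> R) w, 0 < a -> a <= b -> RInt_is (fun x => f (h x)) a b w <-> RInt_is (fun x => f (g x)) a b w).
  { intros a b f w Ha Hab. split; apply RInt_is_ext; auto; intros x Hx; rewrite E; auto; lra. }
  split; [|split].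
  - intros a b Ha Hab. destruct (I1 a b Ha Hab) as [vr [vi [vn [R1 [R2 R3]]]]].
    exists vr, vi, vn. split; [|split]; apply (E' a b _ _ Ha Hab); assumption.
  - exists M. intros a b vn Ha Hab Hv. apply (E' a b _ _ Ha Hab) in Hv. eapply HM; eauto.
  - intros eps Heps. destruct (L eps Heps) as [d [B [Hd HL]]]. exists (Rmin d 1), (Rmax B 1). split.
    apply Rmin_glb_lt; lra.
    intros a b vr vi Ha Had HbB R1 R2.
    pose proof (Rmin_l d 1). pose proof (Rmin_r d 1). pose proof (Rmax_l B 1). pose proof (Rmax_r B 1).
    assert (Hab : a <= b) by lra.
    apply (E' a b _ _ Ha Hab) in R1. apply (E' a b _ _ Ha Hab) in R2. apply (HL a b); auto; lra.
Qed.
Definition gam (s : Cpx) (t : R) : Cpx := Cmul (Rcpow t s) (RtoC (exp (- t))).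
Definition tp (p t : R) : R := exp (p * ln t).

Lemma gam_re s t : Re (gam s t) = exp (Re s * ln t) * cos (Im s * ln t) * exp (- t).
Proof. unfold gam. rewrite Rcpow_eq. unfold Cmul, RtoC, Re, Im; simpl. ring. Qed.
Lemma gam_im s t : Im (gam s t) = exp (Re s * ln t) * sin (Im s * ln t) * exp (- t).
Proof. unfold gam. rewrite Rcpow_eq. unfold Cmul, RtoC, Re, Im; simpl. ring. Qed.
Lemma gam_norm s t : Cnorm (gam s t) = tp (Re s) t * exp (- t).
Proof. unfold gam, tp. rewrite Cnorm_mul, Cnorm_Rcpow, Cnorm_RtoC. rewrite Rabs_right. ring. left; apply exp_pos. Qed.

Lemma cont_ext (f h : R -> R) x : (forall y, 0 < y -> f y = h y) -> 0 < x -> continuous f x -> continuous h x.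
Proof.
  intros E Hx Hf. apply (continuous_ext_loc _ f).
  - assert (Hp : 0 < x / 2) by lra. exists (mkposreal _ Hp). intros y Hy.
    apply E. unfold ball in Hy; simpl in Hy; unfold AbsRing_ball, abs, minus, plus, opp in Hy; simpl in Hy.
    apply Rabs_def2 in Hy. lra.
  - exact Hf.
Qed.

Lemma exd_cont (f : R -> R) x : ex_derive f x -> continuous f x.
Proof. intro H. apply (ex_derive_continuous f x H). Qed.

Lemma cont_gam_re s t : 0 < t -> continuous (fun t => Re (gam s t)) t.
Proof.
  intro Ht. apply (cont_ext (fun t => exp (Re s * ln t) * cos (Im s * ln t) * exp (- t))); auto.
  intros; rewrite gam_re; auto.
  apply exd_cont. auto_derive. lra.
Qed.
Lemma cont_gam_im s t : 0 < t -> continuous (fun t => Im (gam s t)) t.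
Proof.
  intro Ht. apply (cont_ext (fun t => exp (Re s * ln t) * sin (Im s * ln t) * exp (- t))); auto.
  intros; rewrite gam_im; auto.
  apply exd_cont. auto_derive. lra.
Qed.
Lemma cont_gam_norm s t : 0 < t -> continuous (fun t => Cnorm (gam s t)) t.
Proof.
  intro Ht. apply (cont_ext (fun t => exp (Re s * ln t) * exp (- t))); auto.
  intros; rewrite gam_norm; auto.
  apply exd_cont. auto_derive. lra.
Qed.

Lemma exRInt_cont (f : R -> R) a b : (forall z, Rmin a b <= z <= Rmax a b -> continuous f z) -> ex_RInt f a b.
Proof. intro H. apply (ex_RInt_continuous f a b H). Qed.

Lemma isR_derive (F df : R -> R) a b :
  (forall x, Rmin a b <= x <= Rmax a b -> is_derive F x (df x)) ->
  (forall x, Rmin a b <= x <= Rmax a b -> continuous df x) -> is_RInt df a b (F b - F a).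
Proof. intros H1 H2. apply (is_RInt_derive F df a b H1 H2). Qed.

Lemma tp_pos p t : 0 < tp p t.
Proof. apply exp_pos. Qed.

Lemma tp_int_01 p u : -1 < p -> 0 < u -> u <= 1 ->
  is_RInt (tp p) u 1 (tp (p + 1) 1 / (p + 1) - tp (p + 1) u / (p + 1)).
Proof.
  intros Hp Hu Hu1.
  apply (isR_derive (fun t => tp (p + 1) t / (p + 1)) (tp p)).
  - intros x Hx. rewrite Rmin_left in Hx by lra. rewrite Rmax_right in Hx by lra.
    unfold tp. auto_derive. lra.
    replace ((p + 1) * ln x) with (p * ln x + ln x) by ring. rewrite exp_plus, exp_ln by lra.
    field. lra.
  - intros x Hx. rewrite Rmin_left in Hx by lra. rewrite Rmax_right in Hx by lra.
    apply exd_cont. unfold tp. auto_derive. lra.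
Qed.

Lemma inv2_int p v : 1 <= v -> is_RInt (fun t => p / (t * t)) 1 v (- p / v - - p / 1).
Proof.
  intros Hv.
  apply (isR_derive (fun t => - p / t) (fun t => p / (t * t))).
  - intros x Hx. rewrite Rmin_left in Hx by lra. rewrite Rmax_right in Hx by lra.
    auto_derive. lra. field. lra.
  - intros x Hx. rewrite Rmin_left in Hx by lra. rewrite Rmax_right in Hx by lra.
    apply exd_cont. auto_derive. nra.
Qed.

Lemma exp_ge_pow t m : 0 <= t -> t ^ m / INR (fact m) <= exp t.
Proof.
  intro Ht. pose proof (exp_series t) as H.
  assert (Hnn : forall i, 0 <= / INR (fact i) * t ^ i).
  { intro i. apply Rmult_le_pos. left; apply Rinv_0_lt_compat, INR_fact_lt_0. apply pow_le; auto. }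
  assert (Hs : sum_f_R0 (fun i => / INR (fact i) * t ^ i) m <= exp t).
  { rewrite <- (is_series_unique _ _ H). apply partial_le_Series; auto. exists (exp t); auto. }
  assert (/ INR (fact m) * t ^ m <= sum_f_R0 (fun i => / INR (fact i) * t ^ i) m).
  { destruct m. simpl. lra. simpl. assert (0 <= sum_f_R0 (fun i => / INR (fact i) * t ^ i) m).
    { clear -Hnn. induction m; simpl. specialize (Hnn O); simpl in Hnn; lra. specialize (Hnn (S m)). simpl in Hnn. lra. }
    simpl in H0. lra. }
  unfold Rdiv. rewrite Rmult_comm. lra.
Qed.

Lemma gam_pt1 p t : tp p t * exp (- t) <= tp p t /\ 0 <= tp p t * exp (- t) \/ t <= 0.
Proof.
  destruct (Rle_dec t 0) as [H|H]. right; auto. left.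
  pose proof (tp_pos p t). assert (exp (- t) <= 1) by (rewrite <- exp_0; apply exp_le; lra).
  pose proof (exp_pos (- t)). split; nra.
Qed.

Lemma gam_pt2 p t m : 1 <= t -> p + 2 <= INR m -> tp p t * exp (- t) <= INR (fact m) / (t * t).
Proof.
  intros Ht Hm.
  assert (Hl : 0 <= ln t) by (rewrite <- ln_1; destruct (Req_dec t 1); [subst; lra | left; apply ln_increasing; lra]).
  assert (T1 : tp p t <= exp ((INR m - 2) * ln t)) by (unfold tp; apply exp_le; nra).
  assert (T2 : exp ((INR m - 2) * ln t) = t ^ m / (t * t)).
  { replace ((INR m - 2) * ln t) with (INR m * ln t + - (ln t + ln t)) by ring.
    rewrite exp_plus, exp_INR_mul, exp_Ropp, exp_plus, exp_ln by lra. field. lra. }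
  assert (T3 : exp (- t) <= INR (fact m) / t ^ m).
  { pose proof (exp_ge_pow t m ltac:(lra)). rewrite exp_Ropp.
    assert (0 < t ^ m) by (apply pow_lt; lra). pose proof (INR_fact_lt_0 m).
    assert (0 < t ^ m / INR (fact m)) by (apply Rdiv_lt_0_compat; auto).
    replace (INR (fact m) / t ^ m) with (/ (t ^ m / INR (fact m))) by (field; lra).
    apply Rinv_le_contravar; auto. }
  assert (0 < t ^ m) by (apply pow_lt; lra). pose proof (INR_fact_lt_0 m). pose proof (tp_pos p t).
  pose proof (exp_pos (- t)).
  apply Rle_trans with ((t ^ m / (t * t)) * (INR (fact m) / t ^ m)).
  - rewrite <- T2. apply Rmult_le_compat; lra.
  - right. field. split; lra.
Qed.

Lemma RInt_mono_int (f : R -> R) u' u v v' :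
  (forall a b, 0 < a -> a <= b -> ex_RInt f a b) -> (forall x, 0 < x -> 0 <= f x) ->
  0 < u' -> u' <= u -> u <= v -> v <= v' -> RInt f u v <= RInt f u' v'.
Proof.
  intros Hi Hp H0 H1 H2 H3.
  assert (Z : forall a b, 0 < a -> a <= b -> 0 <= RInt f a b).
  { intros a b Ha Hab.
    assert (Zi : is_RInt (fun _ => 0) a b 0) by (pose proof (isR_const a b 0) as HH; rewrite Rmult_0_l in HH; exact HH).
    apply (isR_le (fun _ => 0) f a b 0 _ Hab Zi). apply RInt_correct_R; auto. intros; apply Hp; lra. }
  rewrite <- (RChasles f u' v v'); try apply Hi; try lra.
  rewrite <- (RChasles f u' u v); try apply Hi; try lra.
  pose proof (Z u' u ltac:(lra) H1). pose proof (Z v v' ltac:(lra) H3). lra.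
Qed.

Lemma exRInt_gamf p a b : 0 < a -> a <= b -> ex_RInt (fun t => tp p t * exp (- t)) a b.
Proof.
  intros Ha Hab. apply exRInt_cont. intros z Hz. rewrite Rmin_left in Hz by lra. rewrite Rmax_right in Hz by lra.
  apply exd_cont. unfold tp. auto_derive. lra.
Qed.

Lemma gam_bound p : -1 < p -> exists G, forall u v, 0 < u -> u <= v -> RInt (fun t => tp p t * exp (- t)) u v <= G.
Proof.
  intro Hp. destruct (exists_nat_gt (p + 2)) as [m Hm].
  exists (/ (p + 1) + INR (fact m)). intros u v Hu Huv.
  set (f := fun t => tp p t * exp (- t)).
  set (u' := Rmin u 1). set (v' := Rmax v 1).
  assert (Hu' : 0 < u') by (unfold u'; apply Rmin_glb_lt; lra).
  assert (Hu'1 : u' <= 1) by apply Rmin_r. assert (Hv'1 : 1 <= v') by apply Rmax_r.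
  eapply Rle_trans. apply (RInt_mono_int f u' u v v'); auto.
  - intros; apply exRInt_gamf; auto.
  - intros x Hx. destruct (gam_pt1 p x) as [[_ X]|X]; auto; lra.
  - apply Rmin_l.
  - apply Rmax_l.
  - rewrite <- (RChasles f u' 1 v'); try apply exRInt_gamf; try lra.
    assert (I1 : RInt f u' 1 <= tp (p + 1) 1 / (p + 1) - tp (p + 1) u' / (p + 1)).
    { apply (isR_le f (tp p) u' 1); auto. apply RInt_correct_R, exRInt_gamf; auto.
      apply tp_int_01; auto. intros x Hx. destruct (gam_pt1 p x) as [[X _]|X]; auto; lra. }
    assert (I2 : RInt f 1 v' <= - INR (fact m) / v' - - INR (fact m) / 1).
    { apply (isR_le f (fun t => INR (fact m) / (t * t)) 1 v'); auto. apply RInt_correct_R, exRInt_gamf; lra.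
      apply inv2_int; auto. intros x Hx. apply gam_pt2; lra. }
    assert (tp (p + 1) 1 = 1) by (unfold tp; rewrite ln_1, Rmult_0_r; apply exp_0).
    assert (0 < tp (p + 1) u' / (p + 1)) by (apply Rdiv_lt_0_compat; [apply tp_pos | lra]).
    assert (0 < INR (fact m) / v') by (apply Rdiv_lt_0_compat; [apply INR_fact_lt_0 | lra]).
    unfold Rdiv in *. rewrite H in I1. lra.
Qed.

Lemma gam_impint s : -1 < Re s -> exists v, ImpInt_abs (gam s) v.
Proof.
  intro Hp. destruct (gam_bound (Re s) Hp) as [G HG].
  apply (gen_impint (gam s) G).
  - intros a b Ha Hab. split; [|split]; apply exRInt_cont; intros z Hz;
      rewrite Rmin_left in Hz by lra; rewrite Rmax_right in Hz by lra.
    apply cont_gam_re; lra. apply cont_gam_im; lra. apply cont_gam_norm; lra.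
  - intros a b Ha Hab. rewrite (RInt_ext _ (fun t => tp (Re s) t * exp (- t))). apply HG; auto.
    intros x Hx. apply gam_norm.
Qed.

Lemma CGamma_eq s v : ImpInt_abs (gam s) v -> CGamma (Cadd s (RtoC 1)) = v.
Proof.
  intro H. unfold CGamma.
  assert (E : Cadd (Cadd s (RtoC 1)) (RtoC (-1)) = s) by (apply Cpx_eq; unfold Cadd, RtoC, Re, Im; simpl; ring).
  rewrite E. fold (gam s).
  assert (Ex : exists v0, ImpInt_abs (gam s) v0) by (exists v; auto).
  pose proof (epsilon_spec (inhabits (0,0)) _ Ex) as H'.
  eapply impint_unique; eauto.
Qed.
Lemma Cmul_C z w : Cmul z w = Cmult z w.
Proof. reflexivity. Qed.
Lemma Cadd_C z w : Cadd z w = Cplus z w.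
Proof. reflexivity. Qed.
Lemma RtoC_C r : Defs.RtoC r = Coquelicot.Complex.RtoC r.
Proof. reflexivity. Qed.

Ltac toC := repeat match goal with
  | |- context [Cmul ?a ?b] => change (Cmul a b) with (Cmult a b)
  | |- context [Defs.RtoC ?a] => change (Defs.RtoC a) with (Coquelicot.Complex.RtoC a)
  end.

Lemma Rcpow_one x : 0 < x -> Rcpow x (Defs.RtoC 1) = Defs.RtoC x.
Proof. intro Hx. unfold Defs.RtoC. rewrite Rcpow_real. rewrite Rmult_1_l, exp_ln by auto. reflexivity. Qed.
Lemma Rcpow_mone x : 0 < x -> Rcpow x (Defs.RtoC (-1)) = Defs.RtoC (/ x).
Proof.
  intro Hx. unfold Defs.RtoC. rewrite Rcpow_real. replace (-1 * ln x) with (- ln x) by ring. rewrite exp_Ropp, exp_ln by auto. reflexivity.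
Qed.
Lemma Rcpow_zero x : Rcpow x (0, 0) = Defs.RtoC 1.
Proof. rewrite Rcpow_real. rewrite Rmult_0_l, exp_0. reflexivity. Qed.
Lemma Rcpow_inv x s : Cmul (Rcpow x (Copp s)) (Rcpow x s) = Defs.RtoC 1.
Proof.
  rewrite <- Rcpow_add. replace (Cadd (Copp s) s) with ((0, 0) : Cpx).
  apply Rcpow_zero. apply Cpx_eq; unfold Cadd, Copp, Re, Im; simpl; ring.
Qed.

Lemma phi_bound y : 0 <= y -> 0 <= phi y <= y.
Proof.
  intro Hy. unfold phi. pose proof (exp_pos (- y)).
  assert (exp (- y) <= 1) by (rewrite <- exp_0; apply exp_le; lra). split; nra.
Qed.

Lemma cpt_mult (f g : R -> R) x : continuity_pt f x -> continuity_pt g x -> continuity_pt (fun y => f y * g y) x.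
Proof. apply continuity_pt_mult. Qed.
Lemma cpt_minus (f g : R -> R) x : continuity_pt f x -> continuity_pt g x -> continuity_pt (fun y => f y - g y) x.
Proof. apply continuity_pt_minus. Qed.
Lemma cpt_plus (f g : R -> R) x : continuity_pt f x -> continuity_pt g x -> continuity_pt (fun y => f y + g y) x.
Proof. apply continuity_pt_plus. Qed.
Lemma cpt_of (f : R -> R) x : continuous f x -> continuity_pt f x.
Proof. intro H. apply continuity_pt_filterlim. exact H. Qed.
Lemma cpt_to (f : R -> R) x : continuity_pt f x -> continuous f x.
Proof. intro H. apply continuity_pt_filterlim. exact H. Qed.

Lemma cpt_ext (f h : R -> R) x : (forall y, 0 < y -> f y = h y) -> 0 < x -> continuity_pt f x -> continuity_pt h x.
Proof. intros E Hx H. apply cpt_of. apply (cont_ext f h x E Hx). apply cpt_to; auto. Qed.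

Lemma cpt_Cnorm (h : R -> Cpx) x : continuity_pt (fun y => Re (h y)) x -> continuity_pt (fun y => Im (h y)) x ->
  continuity_pt (fun y => Cnorm (h y)) x.
Proof.
  intros H1 H2. unfold Cnorm.
  apply (continuity_pt_comp (fun y => Re (h y) * Re (h y) + Im (h y) * Im (h y)) sqrt).
  apply cpt_plus; apply cpt_mult; auto.
  apply continuity_pt_sqrt. nra.
Qed.

Lemma cpt_Rcpow_re z x : 0 < x -> continuity_pt (fun y => Re (Rcpow y z)) x.
Proof.
  intro Hx. apply (cpt_ext (fun y => exp (Re z * ln y) * cos (Im z * ln y))); auto.
  intros; rewrite Rcpow_eq; reflexivity.
  apply cpt_of, exd_cont. auto_derive. lra.
Qed.
Lemma cpt_Rcpow_im z x : 0 < x -> continuity_pt (fun y => Im (Rcpow y z)) x.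
Proof.
  intro Hx. apply (cpt_ext (fun y => exp (Re z * ln y) * sin (Im z * ln y))); auto.
  intros; rewrite Rcpow_eq; reflexivity.
  apply cpt_of, exd_cont. auto_derive. lra.
Qed.

Definition Gs (s : Cpx) (u v : R) : Cpx :=
  (RInt (fun t => Re (gam s t)) u v, RInt (fun t => Im (gam s t)) u v).

Lemma Gs_CI s u v : 0 < u -> u <= v -> CI (gam s) u v (Gs s u v).
Proof.
  intros Hu Huv. split; simpl; apply RInt_correct_R; apply exRInt_cont; intros z Hz;
    rewrite Rmin_left in Hz by lra; rewrite Rmax_right in Hz by lra.
  apply cont_gam_re; lra. apply cont_gam_im; lra.
Qed.

Section Generic.
Variable A : nat -> Cpx.
Variable c : R.
Hypothesis Hc : 0 < c.
Hypothesis Hser : ex_series (fun k => Cnorm (A k) * lam c k).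

Definition Tm (k : nat) (x : R) : Cpx := Cmul (A k) (Defs.RtoC (phi (x * lam c k))).
Definition Fre (x : R) : R := Series (fun k => Re (Tm k x)).
Definition Fim (x : R) : R := Series (fun k => Im (Tm k x)).
Definition FF (x : R) : Cpx := (Fre x, Fim x).
Definition tailS (n : nat) : R := Series (fun k => Cnorm (A (n + k)%nat) * lam c (n + k)).

Lemma Tm_bound k x : 0 <= x -> Cnorm (Tm k x) <= Cnorm (A k) * lam c k * x.
Proof.
  intro Hx. unfold Tm. rewrite Cnorm_mul, Cnorm_RtoC. pose proof (lam_pos c k).
  destruct (phi_bound (x * lam c k)) as [P1 P2]. nra.
  rewrite Rabs_right by lra. pose proof (Cnorm_ge0 (A k)). nra.
Qed.

Lemma ex_Tm x : 0 <= x -> ex_series (fun k => Cnorm (A k) * lam c k * x).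
Proof. intro. apply (ex_series_scal_r x (fun k => Cnorm (A k) * lam c k)). auto. Qed.

Lemma FF_CS x : 0 <= x -> CS (fun k => Tm k x) (FF x).
Proof.
  intro Hx. split; apply Series_correct.
  - apply (ex_series_le_R _ _ (fun k => Rle_trans _ _ _ (Re_le_Cnorm _) (Tm_bound k x Hx)) (ex_Tm x Hx)).
  - apply (ex_series_le_R _ _ (fun k => Rle_trans _ _ _ (Im_le_Cnorm _) (Tm_bound k x Hx)) (ex_Tm x Hx)).
Qed.

Lemma tailS_ge0 n : 0 <= tailS n.
Proof.
  unfold tailS. apply Series_ge0. apply (ex_series_tail (fun k => Cnorm (A k) * lam c k)); auto.
  intro k. pose proof (Cnorm_ge0 (A (n + k))). pose proof (lam_pos c (n + k)). nra.
Qed.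

Lemma F_unif_gen (f : Cpx -> R) (Hf : forall z, Rabs (f z) <= Cnorm z) x N : 0 <= x ->
  ex_series (fun k => f (Tm k x)) ->
  Rabs (Series (fun k => f (Tm k x)) - sum_f_R0 (fun k => f (Tm k x)) N) <= x * tailS (S N).
Proof.
  intros Hx Hex. rewrite (Series_incr_n _ (S N)) by (lia || auto). change (Init.Nat.pred (S N)) with N.
  replace (sum_f_R0 (fun k : nat => f (Tm k x)) N + Series (fun k : nat => f (Tm (S N + k)%nat x)) - sum_f_R0 (fun k : nat => f (Tm k x)) N)
    with (Series (fun k : nat => f (Tm (S N + k)%nat x))) by ring.
  unfold tailS. rewrite Rmult_comm. rewrite <- Series_scal_r.
  apply Series_abs_le.
  - intro k. eapply Rle_trans. apply Hf. apply Tm_bound; auto.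
  - apply (ex_series_scal_r x (fun k => Cnorm (A (S N + k)%nat) * lam c (S N + k))).
    apply (ex_series_tail (fun k => Cnorm (A k) * lam c k)); auto.
Qed.

Lemma Fre_unif x N : 0 <= x -> Rabs (Fre x - sum_f_R0 (fun k => Re (Tm k x)) N) <= x * tailS (S N).
Proof. intro Hx. apply F_unif_gen; auto. apply Re_le_Cnorm. exists (Re (FF x)). apply (FF_CS x Hx). Qed.
Lemma Fim_unif x N : 0 <= x -> Rabs (Fim x - sum_f_R0 (fun k => Im (Tm k x)) N) <= x * tailS (S N).
Proof. intro Hx. apply F_unif_gen; auto. apply Im_le_Cnorm. exists (Im (FF x)). apply (FF_CS x Hx). Qed.

Lemma cpt_Tm_re k x : continuity_pt (fun y => Re (Tm k y)) x.
Proof. apply cpt_of, exd_cont. unfold Tm, Cmul, Defs.RtoC, Re, Im, phi; simpl. auto_derive. auto. Qed.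
Lemma cpt_Tm_im k x : continuity_pt (fun y => Im (Tm k y)) x.
Proof. apply cpt_of, exd_cont. unfold Tm, Cmul, Defs.RtoC, Re, Im, phi; simpl. auto_derive. auto. Qed.

Lemma cpt_partial (f : Cpx -> R) (Hc1 : forall k x, continuity_pt (fun y => f (Tm k y)) x) n x :
  continuity_pt (fun y => sum_f_R0 (fun k => f (Tm k y)) n) x.
Proof.
  induction n; simpl. apply Hc1. apply (cpt_plus (fun y => sum_f_R0 (fun k => f (Tm k y)) n) (fun y => f (Tm (S n) y))); auto.
Qed.

Lemma tail_lim : forall eps, 0 < eps -> exists N, forall n, (N <= n)%nat -> tailS n < eps.
Proof.
  intros eps Heps. destruct (tail_small _ Hser eps Heps) as [N HN]. exists N. intros n Hn.
  specialize (HN n Hn). unfold tailS. eapply Rle_lt_trans. apply Rle_abs. exact HN.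
Qed.

Lemma cpt_F_gen (f : Cpx -> R) (Hf : forall z, Rabs (f z) <= Cnorm z)
  (Hc1 : forall k x, continuity_pt (fun y => f (Tm k y)) x) x : 0 < x ->
  continuity_pt (fun y => Series (fun k => f (Tm k y))) x.
Proof.
  intro Hx. assert (Hr : 0 < x / 2) by lra.
  apply (CVU_continuity (fun n y => sum_f_R0 (fun k => f (Tm k y)) n) _ x (mkposreal _ Hr)).
  - intros eps Heps. destruct (tail_lim (eps / (2 * x))) as [N HN].
    apply Rdiv_lt_0_compat; lra.
    exists N. intros n y Hn Hy. unfold Boule in Hy; simpl in Hy. apply Rabs_def2 in Hy.
    eapply Rle_lt_trans. apply F_unif_gen; auto. lra.
    apply (ex_series_le_R _ _ (fun k => Rle_trans _ _ _ (Hf _) (Tm_bound k y ltac:(lra))) (ex_Tm y ltac:(lra))).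
    specialize (HN (S n) ltac:(lia)). pose proof (tailS_ge0 (S n)).
    apply Rle_lt_trans with (2 * x * tailS (S n)). apply Rmult_le_compat_r; lra.
    replace eps with (2 * x * (eps / (2 * x))) by (field; lra). apply Rmult_lt_compat_l; lra.
  - intros n y _. apply cpt_partial; auto.
  - unfold Boule; simpl. rewrite Rminus_eq_0, Rabs_R0. lra.
Qed.

Lemma cpt_Fre x : 0 < x -> continuity_pt Fre x.
Proof. intro. apply (cpt_F_gen Re Re_le_Cnorm cpt_Tm_re); auto. Qed.
Lemma cpt_Fim x : 0 < x -> continuity_pt Fim x.
Proof. intro. apply (cpt_F_gen Im Im_le_Cnorm cpt_Tm_im); auto. Qed.

Lemma ln_le' x y : 0 < x -> x <= y -> ln x <= ln y.
Proof. intros Hx Hxy. destruct (Req_dec x y). subst; lra. left; apply ln_increasing; lra. Qed.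

Lemma tp_between p a b x : 0 < a -> a <= x <= b -> tp p x <= tp p a + tp p b.
Proof.
  intros Ha Hx. pose proof (ln_le' a x Ha (proj1 Hx)). pose proof (ln_le' x b ltac:(lra) (proj2 Hx)).
  pose proof (tp_pos p a). pose proof (tp_pos p b). unfold tp in *.
  destruct (Rle_dec 0 p).
  - assert (exp (p * ln x) <= exp (p * ln b)) by (apply exp_le; nra). lra.
  - assert (exp (p * ln x) <= exp (p * ln a)) by (apply exp_le; nra). lra.
Qed.

Lemma point_id k x s : 0 < x ->
  Cmul (Tm k x) (Rcpow x (Cadd s (Defs.RtoC (-1)))) =
  Cmul (Cmul (A k) (Rcpow (lam c k) (Copp s))) (Cmul (Defs.RtoC (lam c k)) (gam s (lam c k * x))).
Proof.
  intro Hx. pose proof (lam_pos c k) as Hl. set (l := lam c k) in *.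
  pose proof (Rcpow_inv l s) as Hinv.
  unfold Tm, gam, phi. fold l. rewrite Rcpow_add, Rcpow_mone by auto. rewrite (Rcpow_mulbase l x) by auto.
  set (Q' := Rcpow l (Copp s)) in *. set (Q := Rcpow l s) in *. set (X := Rcpow x s).
  set (e := exp (- (l * x))). replace (exp (- (x * l))) with e by (unfold e; f_equal; ring).
  toC. change (Cmult Q' Q = Coquelicot.Complex.RtoC 1) in Hinv.
  transitivity (Cmult (Cmult Q' Q) (Cmult (A k) (Cmult X (Coquelicot.Complex.RtoC (l * e))))).
  - rewrite Hinv. apply Cpx_eq; unfold Cmult, Coquelicot.Complex.RtoC, Re, Im; simpl; unfold Defs.Re, Defs.Im; simpl; field; lra.
  - transitivity (Cmult (Cmult Q' Q) (Cmult (A k) (Cmult X (Cmult (Coquelicot.Complex.RtoC l) (Coquelicot.Complex.RtoC e))))).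
    + f_equal. f_equal. f_equal. apply Cpx_eq; unfold Cmult, Coquelicot.Complex.RtoC, Re, Im; simpl; ring.
    + toC. match goal with |- ?l = ?r => change (@eq C l r) end. ring.
Qed.

Lemma Csum_mul_r (u : nat -> Cpx) w N : Csum (fun k => Cmul (u k) w) N = Cmul (Csum u N) w.
Proof.
  induction N.
  - unfold Csum; simpl. apply Cpx_eq; reflexivity.
  - rewrite !Csum_S, IHN. apply Cpx_eq; unfold Cadd, Cmul, Csum, Re, Im; simpl; ring.
Qed.

Lemma F_int s a b : 0 < a -> a <= b ->
  exists J, CI (fun x => Cmul (FF x) (Rcpow x (Cadd s (Defs.RtoC (-1))))) a b J /\
  CS (fun k => Cmul (Cmul (A k) (Rcpow (lam c k) (Copp s))) (Gs s (lam c k * a) (lam c k * b))) J.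
Proof.
  intros Ha Hab.
  set (P := fun x => Rcpow x (Cadd s (Defs.RtoC (-1)))).
  set (h := fun x => Cmul (FF x) (P x)).
  assert (Hcont : forall x, 0 < x -> continuity_pt (fun y => Re (h y)) x /\ continuity_pt (fun y => Im (h y)) x).
  { intros x Hx. split.
    - apply (cpt_ext (fun y => Fre y * Re (P y) - Fim y * Im (P y)) _ x (fun y _ => eq_refl) Hx).
      apply cpt_minus; apply cpt_mult; unfold P; auto using cpt_Fre, cpt_Fim, cpt_Rcpow_re, cpt_Rcpow_im.
    - apply (cpt_ext (fun y => Fre y * Im (P y) + Fim y * Re (P y)) _ x (fun y _ => eq_refl) Hx).
      apply cpt_plus; apply cpt_mult; unfold P; auto using cpt_Fre, cpt_Fim, cpt_Rcpow_re, cpt_Rcpow_im. }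
  assert (Hex : forall f, (forall x, 0 < x -> continuity_pt f x) -> ex_RInt f a b).
  { intros f Hf. apply exRInt_cont. intros z Hz. rewrite Rmin_left in Hz by lra. rewrite Rmax_right in Hz by lra.
    apply cpt_to, Hf. lra. }
  set (J := (RInt (fun x => Re (h x)) a b, RInt (fun x => Im (h x)) a b)).
  assert (HJ : CI h a b J).
  { split; apply RInt_correct_R; apply Hex; intros; apply Hcont; auto. }
  exists J. split. exact HJ.
  set (I := fun k => Cmul (Cmul (A k) (Rcpow (lam c k) (Copp s))) (Gs s (lam c k * a) (lam c k * b))).
  assert (HI : forall k, CI (fun x => Cmul (Tm k x) (P x)) a b (I k)).
  { intro k. pose proof (lam_pos c k) as Hl.
    pose proof (Gs_CI s (lam c k * a) (lam c k * b) ltac:(nra) ltac:(nra)) as G.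
    apply CI_comp_lin in G. apply (CI_scal (Cmul (A k) (Rcpow (lam c k) (Copp s)))) in G.
    eapply CI_ext. 2: exact G. intros x Hx. rewrite Rmin_left in Hx by lra.
    unfold P. rewrite point_id by lra. reflexivity. }
  assert (Hpart : forall N, CI (fun x => Csum (fun k => Cmul (Tm k x) (P x)) N) a b (Csum I N)).
  { intro N. apply (CI_finsum (fun k x => Cmul (Tm k x) (P x))). auto. }
  set (K := tp (Re s) a + tp (Re s) b).
  assert (HK : 0 < K) by (unfold K; pose proof (tp_pos (Re s) a); pose proof (tp_pos (Re s) b); lra).
  assert (Perr : forall N x, a <= x <= b ->
     Rabs (Re (h x) - Re (Csum (fun k => Cmul (Tm k x) (P x)) N)) <= 2 * tailS (S N) * K /\
     Rabs (Im (h x) - Im (Csum (fun k => Cmul (Tm k x) (P x)) N)) <= 2 * tailS (S N) * K).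
  { intros N x Hx. rewrite Csum_mul_r.
    set (D := (Fre x - sum_f_R0 (fun k => Re (Tm k x)) N, Fim x - sum_f_R0 (fun k => Im (Tm k x)) N) : Cpx).
    assert (ED : forall f : Cpx -> R, f = Re \/ f = Im -> f (h x) - f (Cmul (Csum (fun k => Tm k x) N) (P x)) = f (Cmul D (P x))).
    { intros f [-> | ->]; unfold h, D, FF, Cmul, Csum, Re, Im; simpl; ring. }
    assert (ND : Cnorm (Cmul D (P x)) <= 2 * tailS (S N) * K).
    { rewrite Cnorm_mul. unfold P. rewrite Cnorm_Rcpow.
      pose proof (Fre_unif x N ltac:(lra)). pose proof (Fim_unif x N ltac:(lra)).
      assert (H1 : Cnorm D <= Rabs (Fre x - sum_f_R0 (fun k => Re (Tm k x)) N) + Rabs (Fim x - sum_f_R0 (fun k => Im (Tm k x)) N))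
        by exact (Cnorm_le_sum D).
      assert (E1 : x * exp (Re (Cadd s (Defs.RtoC (-1))) * ln x) = tp (Re s) x).
      { unfold tp, Cadd, Defs.RtoC, Re, Im; simpl. replace ((fst s + -1) * ln x) with (fst s * ln x + - ln x) by ring.
        rewrite exp_plus, exp_Ropp, exp_ln by lra. field. lra. }
      pose proof (tp_between (Re s) a b x Ha Hx). fold K in H2.
      pose proof (exp_pos (Re (Cadd s (Defs.RtoC (-1))) * ln x)). pose proof (tailS_ge0 (S N)).
      pose proof (tp_pos (Re s) x).
      assert (Cnorm D <= 2 * (x * tailS (S N))) by lra.
      apply Rle_trans with (2 * (x * tailS (S N)) * exp (Re (Cadd s (Defs.RtoC (-1))) * ln x)).
      apply Rmult_le_compat_r; lra.
      replace (2 * (x * tailS (S N)) * exp (Re (Cadd s (Defs.RtoC (-1))) * ln x)) with (2 * tailS (S N) * tp (Re s) x) by (rewrite <- E1; ring).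
      apply Rmult_le_compat_l; lra. }
    split.
    - rewrite (ED Re) by auto. eapply Rle_trans. apply Re_le_Cnorm. auto.
    - rewrite (ED Im) by auto. eapply Rle_trans. apply Im_le_Cnorm. auto. }
  assert (Ierr : forall N, Rabs (Re J - Re (Csum I N)) <= 2 * tailS (S N) * K * (b - a) /\
                           Rabs (Im J - Im (Csum I N)) <= 2 * tailS (S N) * K * (b - a)).
  { intro N. destruct HJ as [J1 J2]. destruct (Hpart N) as [P1 P2]. split.
    - apply (isR_bound (fun x => Re (h x) - Re (Csum (fun k => Cmul (Tm k x) (P x)) N)) a b); auto.
      apply isR_minus; auto. intros x Hx; apply (Perr N x Hx).
    - apply (isR_bound (fun x => Im (h x) - Im (Csum (fun k => Cmul (Tm k x) (P x)) N)) a b); auto.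
      apply isR_minus; auto. intros x Hx; apply (Perr N x Hx). }
  assert (Conv : forall eps, 0 < eps -> exists N, forall n, (N <= n)%nat ->
     Rabs (Re J - Re (Csum I n)) < eps /\ Rabs (Im J - Im (Csum I n)) < eps).
  { intros eps Heps. set (C0 := 2 * K * (b - a) + 1).
    assert (HC0 : 0 < C0) by (unfold C0; nra).
    destruct (tail_lim (eps / C0) (Rdiv_lt_0_compat _ _ Heps HC0)) as [N HN].
    exists N. intros n Hn. specialize (HN (S n) ltac:(lia)). destruct (Ierr n) as [E1 E2].
    pose proof (tailS_ge0 (S n)).
    assert (2 * tailS (S n) * K * (b - a) < eps).
    { apply Rle_lt_trans with (tailS (S n) * C0). unfold C0. nra.
      replace eps with (eps / C0 * C0) by (field; lra). apply Rmult_lt_compat_r; lra. }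
    split; lra. }
  split; apply is_series_lim, is_lim_seq_Reals; intros eps Heps; destruct (Conv eps Heps) as [N HN];
    exists N; intros n Hn; unfold R_dist; rewrite Rabs_minus_sym; apply HN; lia.
Qed.

End Generic.
Lemma ln_lam c k : ln (lam c k) = - c * ln (INR (S k)).
Proof. unfold lam. apply ln_exp. Qed.

Lemma lam_anti c k K : 0 <= c -> (k <= K)%nat -> lam c K <= lam c k.
Proof.
  intros Hc H. unfold lam. apply exp_le.
  assert (ln (INR (S k)) <= ln (INR (S K))).
  { apply ln_le'. apply lt_0_INR; lia. apply le_INR; lia. }
  nra.
Qed.

Lemma Rabs_minus_le x y : Rabs (x - y) <= Rabs x + Rabs y.
Proof. unfold Rminus. eapply Rle_trans. apply Rabs_triang. rewrite Rabs_Ropp. lra. Qed.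

Lemma Gs_bound s2 Gp u v :
  (forall u v, 0 < u -> u <= v -> RInt (fun t => tp (Re s2) t * exp (- t)) u v <= Gp) -> 0 < u -> u <= v ->
  Rabs (Re (Gs s2 u v)) <= Gp /\ Rabs (Im (Gs s2 u v)) <= Gp.
Proof.
  intros HB Hu Huv. destruct (Gs_CI s2 u v Hu Huv) as [G1 G2].
  pose proof (RInt_correct_R _ _ _ (exRInt_gamf (Re s2) u v Hu Huv)) as I.
  specialize (HB u v Hu Huv). split.
  - eapply Rle_trans. 2: exact HB. apply (isR_abs_le _ _ u v _ _ Huv G1 I).
    intros x Hx. rewrite <- gam_norm. apply Re_le_Cnorm.
  - eapply Rle_trans. 2: exact HB. apply (isR_abs_le _ _ u v _ _ Huv G2 I).
    intros x Hx. rewrite <- gam_norm. apply Im_le_Cnorm.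
Qed.

Lemma impint_bound g v : ImpInt_abs g v -> exists u w vr vi, 0 < u /\ u <= w /\
  RInt_is (fun x => Re (g x)) u w vr /\ RInt_is (fun x => Im (g x)) u w vi /\
  Rabs (vr - Re v) < 1 /\ Rabs (vi - Im v) < 1.
Proof.
  intros [I1 [_ L]]. destruct (L 1 ltac:(lra)) as [d [B [Hd H]]].
  set (u := d / 2). set (w := Rmax B u + 1).
  assert (Hw1 : B < w) by (unfold w; pose proof (Rmax_l B u); lra).
  assert (Hw2 : u <= w) by (unfold w; pose proof (Rmax_r B u); lra).
  destruct (I1 u w ltac:(unfold u; lra) Hw2) as [vr [vi [vn [R1 [R2 R3]]]]].
  exists u, w, vr, vi. destruct (H u w vr vi ltac:(unfold u; lra) ltac:(unfold u; lra) Hw1 R1 R2).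
  repeat split; auto. unfold u; lra.
Qed.

Section Main.
Variable a : nat -> Cpx.
Variable c : R.
Variable s : Cpx.
Hypothesis Hc0 : 0 < c.
Hypothesis Hser : ex_series (fun k => Cnorm (a (S k)) * lam c k).
Hypothesis HserE : ex_series (fun k => Cnorm (a (S k)) * exp (c * Re s * ln (INR (S k)))).
Hypothesis Hs1 : -1 < Re s.

Definition AA (k : nat) : Cpx := a (S k).
Definition EE (k : nat) : Cpx := Cmul (AA k) (Rcpow (lam c k) (Copp s)).

Lemma Cnorm_EE k : Cnorm (EE k) = Cnorm (a (S k)) * exp (c * Re s * ln (INR (S k))).
Proof.
  unfold EE, AA. rewrite Cnorm_mul, Cnorm_Rcpow, ln_lam. f_equal. f_equal. unfold Copp, Re; simpl. ring.
Qed.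

Lemma ex_EE : ex_series (fun k => Cnorm (EE k)).
Proof. eapply ex_series_ext. 2: exact HserE. intro k. rewrite Cnorm_EE. reflexivity. Qed.

Lemma Rcpow_lam_eq k : Rcpow (lam c k) (Copp s) = Rcpow (INR (S k)) (Copp (Cmul (Defs.RtoC (- c)) s)).
Proof.
  rewrite !Rcpow_eq, ln_lam. unfold Copp, Cmul, Defs.RtoC, Re, Im; cbn [fst snd].
  replace (- fst s * (- c * ln (INR (S k)))) with (- (- c * fst s - 0 * snd s) * ln (INR (S k))) by ring.
  replace (- snd s * (- c * ln (INR (S k)))) with (- (- c * snd s + 0 * fst s) * ln (INR (S k))) by ring.
  reflexivity.
Qed.

Lemma dir_eq : exists D, CS EE D /\ dirichlet a (Cmul (Defs.RtoC (- c)) s) = D.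
Proof.
  destruct (CS_abs EE ex_EE) as [D [HD _]]. exists D. split; auto.
  unfold dirichlet. apply Cseries_eq. eapply CS_ext. 2: exact HD.
  intro k. unfold EE, AA. rewrite Rcpow_lam_eq. reflexivity.
Qed.

Definition hh (x : R) : Cpx := Cmul (FF AA c x) (Rcpow x (Cadd s (Defs.RtoC (-1)))).

Lemma Hser_AA : ex_series (fun k => Cnorm (AA k) * lam c k).
Proof. exact Hser. Qed.

Lemma hh_cont x : 0 < x ->
  continuity_pt (fun y => Re (hh y)) x /\ continuity_pt (fun y => Im (hh y)) x /\ continuity_pt (fun y => Cnorm (hh y)) x.
Proof.
  intro Hx. set (P := fun y => Rcpow y (Cadd s (Defs.RtoC (-1)))).
  assert (C1 : continuity_pt (fun y => Re (hh y)) x).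
  { apply (cpt_ext (fun y => Fre AA c y * Re (P y) - Fim AA c y * Im (P y)) _ x (fun y _ => eq_refl) Hx).
    apply cpt_minus; apply cpt_mult; unfold P; auto using (cpt_Fre AA c Hser_AA), (cpt_Fim AA c Hser_AA), cpt_Rcpow_re, cpt_Rcpow_im. }
  assert (C2 : continuity_pt (fun y => Im (hh y)) x).
  { apply (cpt_ext (fun y => Fre AA c y * Im (P y) + Fim AA c y * Re (P y)) _ x (fun y _ => eq_refl) Hx).
    apply cpt_plus; apply cpt_mult; unfold P; auto using (cpt_Fre AA c Hser_AA), (cpt_Fim AA c Hser_AA), cpt_Rcpow_re, cpt_Rcpow_im. }
  split; auto. split; auto. apply cpt_Cnorm; auto.
Qed.

Lemma hh_int u v : 0 < u -> u <= v ->
  ex_RInt (fun x => Re (hh x)) u v /\ ex_RInt (fun x => Im (hh x)) u v /\ ex_RInt (fun x => Cnorm (hh x)) u v.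
Proof.
  intros Hu Huv. split; [|split]; apply exRInt_cont; intros z Hz; rewrite Rmin_left in Hz by lra;
    rewrite Rmax_right in Hz by lra; apply cpt_to; apply hh_cont; lra.
Qed.

Lemma Cnorm_FF_le x : 0 <= x -> Cnorm (FF AA c x) <= Series (fun k => Cnorm (a (S k)) * phi (x * lam c k)).
Proof.
  intro Hx. 
  assert (E : forall k, Cnorm (Tm AA c k x) = Cnorm (a (S k)) * phi (x * lam c k)).
  { intro k. unfold Tm, AA. rewrite Cnorm_mul, Cnorm_RtoC. rewrite Rabs_right. reflexivity.
    apply Rle_ge, phi_bound. pose proof (lam_pos c k). nra. }
  assert (Ex : ex_series (fun k => Cnorm (Tm AA c k x))).
  { apply (ex_series_le_R _ _ (fun k => Rle_trans _ _ _ (Req_le _ _ (Rabs_right _ (Rle_ge _ _ (Cnorm_ge0 _)))) (Tm_bound AA c k x Hx)) (ex_Tm AA c Hser_AA x Hx)). }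
  destruct (CS_abs _ Ex) as [l [Hl Hn]].
  rewrite (CS_unique _ _ _ (FF_CS AA c Hser_AA x Hx) Hl).
  rewrite <- (Series_ext _ _ E). exact Hn.
Qed.

Lemma main_impint D G : CS EE D -> ImpInt_abs (gam s) G -> ImpInt_abs hh (Cmul D G).
Proof.
  intros HD HG.
  destruct (gam_bound (Re s) Hs1) as [Gp HGp].
  set (SE := Series (fun k => Cnorm (EE k))).
  assert (HSE : 0 <= SE) by (apply Series_ge0; [apply ex_EE | intro; apply Cnorm_ge0]).
  split; [|split].
  -
    intros u v Hu Huv. destruct (hh_int u v Hu Huv) as [I1 [I2 I3]].
    exists (RInt (fun x => Re (hh x)) u v), (RInt (fun x => Im (hh x)) u v), (RInt (fun x => Cnorm (hh x)) u v).
    split; [|split]; apply RInt_is_of, RInt_correct_R; auto.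
  -
    exists (SE * (2 * Gp)). intros u v vn Hu Huv Hv. apply RInt_is_to in Hv.
    destruct (hh_int u v Hu Huv) as [I1 [I2 I3]].
    rewrite (isR_unique _ _ _ _ _ Hv (RInt_correct_R _ _ _ I3)).
    set (A' := fun k => Defs.RtoC (Cnorm (a (S k)))).
    set (s' := Defs.RtoC (Re s)).
    assert (Hser' : ex_series (fun k => Cnorm (A' k) * lam c k)).
    { eapply ex_series_ext. 2: exact Hser. intro k. unfold A'. rewrite Cnorm_RtoC, Rabs_right. reflexivity.
      apply Rle_ge, Cnorm_ge0. }
    destruct (F_int A' c Hser' s' u v Hu Huv) as [J' [[CJ1 _] SJ']].
    assert (Pw : forall x, u <= x <= v -> Cnorm (hh x) <= Re (Cmul (FF A' c x) (Rcpow x (Cadd s' (Defs.RtoC (-1)))))).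
    { intros x Hx. unfold hh. rewrite Cnorm_mul, Cnorm_Rcpow.
      assert (ER : Re (Cmul (FF A' c x) (Rcpow x (Cadd s' (Defs.RtoC (-1))))) = Fre A' c x * exp ((Re s + -1) * ln x)).
      { rewrite Rcpow_eq. unfold Cmul, FF, Cadd, s', Defs.RtoC, Re, Im; cbn [fst snd].
        replace ((0 + 0) * ln x) with 0 by ring. rewrite cos_0, sin_0. ring. }
      rewrite ER.
      assert (EF : Fre A' c x = Series (fun k => Cnorm (a (S k)) * phi (x * lam c k))).
      { unfold Fre. apply Series_ext. intro k. unfold Tm, A', Cmul, Defs.RtoC, Re, Im; cbn [fst snd]. ring. }
      rewrite EF. replace (Re (Cadd s (Defs.RtoC (-1)))) with (Re s + -1) by reflexivity.
      apply Rmult_le_compat_r. left; apply exp_pos. apply Cnorm_FF_le. lra. }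
    eapply Rle_trans. apply (isR_le _ _ u v _ _ Huv (RInt_correct_R _ _ _ I3) CJ1 Pw).
    destruct SJ' as [SJ1 _]. pose proof SJ1 as SJ0. apply is_series_unique in SJ1. rewrite <- SJ1.
    unfold SE. rewrite <- Series_scal_r.
    set (T' := fun k => Cmul (Cmul (A' k) (Rcpow (lam c k) (Copp s'))) (Gs s' (lam c k * u) (lam c k * v))).
    assert (TB : forall k, Re (T' k) <= Cnorm (EE k) * (2 * Gp)).
    { intro k. eapply Rle_trans. apply Rle_trans with (Rabs (Re (T' k))). apply RRle_abs. apply Re_le_Cnorm.
      unfold T'. rewrite Cnorm_mul. pose proof (lam_pos c k).
      assert (E1 : Cnorm (Cmul (A' k) (Rcpow (lam c k) (Copp s'))) = Cnorm (EE k)).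
      { unfold EE, AA, A', s'. rewrite !Cnorm_mul, !Cnorm_Rcpow, Cnorm_RtoC, Rabs_right by (apply Rle_ge, Cnorm_ge0).
        reflexivity. }
      rewrite E1. apply Rmult_le_compat_l. apply Cnorm_ge0.
      destruct (Gs_bound s' Gp (lam c k * u) (lam c k * v)) as [B1 B2]; auto; try nra.
      pose proof (Cnorm_le_sum (Gs s' (lam c k * u) (lam c k * v))). lra. }
    apply Series_le_gen; auto.
    + exists (Re J'). exact SJ0.
    + apply (ex_series_scal_r (2 * Gp) (fun k => Cnorm (EE k))). apply ex_EE.
  -
    intros eps Heps.
    destruct (impint_bound _ _ HG) as [u0 [w0 [vr0 [vi0 [Hu0 [Huw0 [R01 [R02 [B01 B02]]]]]]]]].
    destruct (Gs_CI s u0 w0 Hu0 Huw0) as [G01 G02].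
    apply RInt_is_to in R01. apply RInt_is_to in R02.
    rewrite (isR_unique _ _ _ _ _ R01 G01) in B01. rewrite (isR_unique _ _ _ _ _ R02 G02) in B02.
    destruct (Gs_bound s Gp u0 w0 HGp Hu0 Huw0) as [GB1 GB2].
    set (Kb := 2 * Gp + 1).
    assert (HKb : 0 < Kb).
    { unfold Kb. pose proof (Rabs_pos (Re (Gs s u0 w0))). lra. }
    assert (GmG : forall u v, 0 < u -> u <= v -> Rabs (Re (Gs s u v) - Re G) <= Kb /\ Rabs (Im (Gs s u v) - Im G) <= Kb).
    { intros u v Hu Huv. destruct (Gs_bound s Gp u v HGp Hu Huv) as [C1 C2]. unfold Kb.
      split.
      - assert (Rabs (Re G) <= Gp + 1).
        { replace (Re G) with (Re (Gs s u0 w0) - (Re (Gs s u0 w0) - Re G)) by ring.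
          eapply Rle_trans. apply Rabs_minus_le. lra. }
        eapply Rle_trans. apply Rabs_minus_le. lra.
      - assert (Rabs (Im G) <= Gp + 1).
        { replace (Im G) with (Im (Gs s u0 w0) - (Im (Gs s u0 w0) - Im G)) by ring.
          eapply Rle_trans. apply Rabs_minus_le. lra. }
        eapply Rle_trans. apply Rabs_minus_le. lra. }
    set (eps1 := eps / (4 * (SE + 1))).
    assert (He1 : 0 < eps1) by (unfold eps1; apply Rdiv_lt_0_compat; lra).
    destruct HG as [_ [_ LG]].
    destruct (LG eps1 He1) as [d1 [B1 [Hd1 HL1]]].
    destruct (tail_small _ ex_EE (eps / (8 * Kb)) ltac:(apply Rdiv_lt_0_compat; lra)) as [K0 HK0].
    set (N0 := S K0).
    pose proof (lam_pos c N0) as Hl0. pose proof (lam_le1 c N0 ltac:(lra)) as Hl01.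
    exists (Rmin d1 1), (Rmax B1 1 / lam c N0). split. apply Rmin_glb_lt; lra.
    intros x1 x2 vr vi Hx1 Hx1d Hx2 Hvr Hvi.
    pose proof (Rmin_l d1 1). pose proof (Rmin_r d1 1). pose proof (Rmax_l B1 1). pose proof (Rmax_r B1 1).
    assert (HBB : Rmax B1 1 <= Rmax B1 1 / lam c N0).
    { unfold Rdiv. rewrite <- (Rmult_1_r (Rmax B1 1)) at 1. apply Rmult_le_compat_l. lra.
      rewrite <- Rinv_1. apply Rinv_le_contravar; lra. }
    assert (Hx12 : x1 <= x2) by lra.
    destruct (F_int AA c Hser_AA s x1 x2 Hx1 Hx12) as [J [[CJ1 CJ2] SJ]].
    apply RInt_is_to in Hvr. apply RInt_is_to in Hvi.
    rewrite (isR_unique _ _ _ _ _ Hvr CJ1). rewrite (isR_unique _ _ _ _ _ Hvi CJ2).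
    set (Gk := fun k => Gs s (lam c k * x1) (lam c k * x2)).
    set (w := fun k => Cadd (Cmul (EE k) (Gk k)) (Copp (Cmul (EE k) G))).
    assert (Hw : CS w (Cadd J (Copp (Cmul D G)))).
    { apply CS_minus. exact SJ. apply CS_scal_r. exact HD. }
    set (bnd := fun k => Cnorm (EE k) * (Rabs (Re (Gk k) - Re G) + Rabs (Im (Gk k) - Im G))).
    assert (Hwb : forall k, Cnorm (w k) <= bnd k).
    { intro k. unfold w, bnd.
      replace (Cadd (Cmul (EE k) (Gk k)) (Copp (Cmul (EE k) G))) with (Cmul (EE k) (Cadd (Gk k) (Copp G)))
        by (apply Cpx_eq; unfold Cadd, Cmul, Copp, Re, Im; simpl; ring).
      rewrite Cnorm_mul. apply Rmult_le_compat_l. apply Cnorm_ge0.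
      eapply Rle_trans. apply Cnorm_le_sum. right; reflexivity. }
    assert (Hbb : forall k, bnd k <= Cnorm (EE k) * (2 * Kb)).
    { intro k. unfold bnd. apply Rmult_le_compat_l. apply Cnorm_ge0. pose proof (lam_pos c k).
      destruct (GmG (lam c k * x1) (lam c k * x2)); try nra. unfold Gk. lra. }
    assert (Ebnd : ex_series bnd).
    { apply (ex_series_le_R _ (fun k => Cnorm (EE k) * (2 * Kb))).
      intro k. rewrite Rabs_right. apply Hbb. unfold bnd. apply Rle_ge, Rmult_le_pos. apply Cnorm_ge0.
      pose proof (Rabs_pos (Re (Gk k) - Re G)). pose proof (Rabs_pos (Im (Gk k) - Im G)). lra.
      apply (ex_series_scal_r (2 * Kb) (fun k => Cnorm (EE k))). apply ex_EE. }
    assert (Sbnd : Series bnd < eps).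
    { rewrite (Series_incr_n bnd N0) by (unfold N0; lia || auto). change (Init.Nat.pred N0) with K0.
      assert (T1 : Series (fun k => bnd (N0 + k)%nat) < eps / 4).
      { apply Rle_lt_trans with (Series (fun k => Cnorm (EE (N0 + k)%nat)) * (2 * Kb)).
        - rewrite <- Series_scal_r. apply Series_le. intro k; split.
          unfold bnd. apply Rmult_le_pos. apply Cnorm_ge0.
          pose proof (Rabs_pos (Re (Gk (N0 + k)%nat) - Re G)). pose proof (Rabs_pos (Im (Gk (N0 + k)%nat) - Im G)). lra.
          apply Hbb.
          apply (ex_series_scal_r (2 * Kb) (fun k => Cnorm (EE (N0 + k)%nat))).
          apply (ex_series_tail (fun k => Cnorm (EE k))). apply ex_EE.
        - specialize (HK0 N0 ltac:(unfold N0; lia)).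
          pose proof (Rle_abs (Series (fun k : nat => Cnorm (EE (N0 + k)%nat)))).
          assert (Series (fun k : nat => Cnorm (EE (N0 + k)%nat)) < eps / (8 * Kb)) by lra.
          apply Rlt_le_trans with (eps / (8 * Kb) * (2 * Kb)). apply Rmult_lt_compat_r; lra.
          right. field. lra. }
      assert (T2 : sum_f_R0 bnd K0 <= eps / 2 * (SE / (SE + 1))).
      { apply Rle_trans with (sum_f_R0 (fun k => Cnorm (EE k) * (2 * eps1)) K0).
        - apply sum_Rle. intros k Hk. unfold bnd. apply Rmult_le_compat_l. apply Cnorm_ge0.
          pose proof (lam_pos c k). pose proof (lam_le1 c k ltac:(lra)).
          assert (Hlk : lam c N0 <= lam c k) by (apply lam_anti; unfold N0; lia || lra).
          destruct (Gs_CI s (lam c k * x1) (lam c k * x2)) as [Q1 Q2]; try nra.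
          destruct (HL1 (lam c k * x1) (lam c k * x2) (Re (Gk k)) (Im (Gk k))) as [Z1 Z2].
          + nra.
          + nra.
          + assert (Rmax B1 1 < lam c N0 * x2).
            { apply Rmult_lt_reg_r with (/ lam c N0). apply Rinv_0_lt_compat; lra.
              replace (lam c N0 * x2 * / lam c N0) with x2 by (field; lra). unfold Rdiv in HBB. lra. }
            nra.
          + apply RInt_is_of. exact Q1.
          + apply RInt_is_of. exact Q2.
          + lra.
        - rewrite <- scal_sum. 
          pose proof (partial_le_Series (fun k => Cnorm (EE k)) K0 ex_EE (fun k => Cnorm_ge0 _)). fold SE in H3.
          unfold eps1.
          assert (0 <= sum_f_R0 (fun k => Cnorm (EE k)) K0).
          { clear. induction K0; simpl. apply Cnorm_ge0. pose proof (Cnorm_ge0 (EE (S K0))). lra. }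
          apply Rle_trans with (2 * (eps / (4 * (SE + 1))) * SE).
          apply Rmult_le_compat_l. apply Rmult_le_pos. lra. left; apply Rdiv_lt_0_compat; lra. auto.
          right. field. lra. }
      assert (eps / 2 * (SE / (SE + 1)) <= eps / 2).
      { assert (Hq : SE / (SE + 1) <= 1).
        { apply Rmult_le_reg_r with (SE + 1). lra. unfold Rdiv. rewrite Rmult_assoc, Rinv_l by lra. lra. }
        assert (0 <= SE / (SE + 1)) by (apply Rmult_le_pos; [lra | left; apply Rinv_0_lt_compat; lra]).
        nra. }
      lra. }
    destruct Hw as [Hw1 Hw2].
    pose proof (is_series_unique _ _ Hw1) as E1. pose proof (is_series_unique _ _ Hw2) as E2.
    assert (Ecn : ex_series (fun k => Cnorm (w k))).
    { apply (ex_series_le_R _ bnd); auto. intro k. rewrite Rabs_right by (apply Rle_ge, Cnorm_ge0). apply Hwb. }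
    assert (Sw : Series (fun k => Cnorm (w k)) < eps).
    { eapply Rle_lt_trans. 2: exact Sbnd. apply Series_le; auto. intro k; split. apply Cnorm_ge0. apply Hwb. }
    split.
    + replace (Re J - Re (Cmul D G)) with (Re (Cadd J (Copp (Cmul D G)))) by (unfold Cadd, Copp, Re; simpl; ring).
      rewrite <- E1. eapply Rle_lt_trans. 2: exact Sw. apply Series_abs_le; auto. intro; apply Re_le_Cnorm.
    + replace (Im J - Im (Cmul D G)) with (Im (Cadd J (Copp (Cmul D G)))) by (unfold Cadd, Copp, Im; simpl; ring).
      rewrite <- E2. eapply Rle_lt_trans. 2: exact Sw. apply Series_abs_le; auto. intro; apply Im_le_Cnorm.
Qed.

End Main.
Theorem theorem2 (a : nat -> Cpx) (sigma c : R)
  (Habs_cv : forall s : R, sigma < s ->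
     exists l, infinite_sum (fun k => Cnorm (a (S k)) * Rpower (INR (S k)) (- s)) l)
  (Habs_dv : forall s : R, s < sigma ->
     ~ exists l, infinite_sum (fun k => Cnorm (a (S k)) * Rpower (INR (S k)) (- s)) l)
  (Hc0 : 0 < c) (Hcs : sigma < c)
  (s : Cpx) (Hs1 : -1 < Re s) (Hs2 : Re s < - sigma / c) :
  ImpInt_abs (fun x => Cmul (Rc a c x) (Rcpow x (Cadd s (RtoC (-1)))))
             (Cmul (dirichlet a (Cmul (RtoC (- c)) s)) (CGamma (Cadd s (RtoC 1)))).
Proof.
  assert (Hser : ex_series (fun k => Cnorm (a (S k)) * lam c k)).
  { destruct (Habs_cv c Hcs) as [l Hl]. exists l. apply is_series_Reals. exact Hl. }
  assert (Hq : sigma < - c * Re s).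
  { assert (c * Re s < c * (- sigma / c)) by (apply Rmult_lt_compat_l; auto).
    replace (c * (- sigma / c)) with (- sigma) in H by (field; lra). lra. }
  assert (HserE : ex_series (fun k => Cnorm (a (S k)) * exp (c * Re s * ln (INR (S k))))).
  { destruct (Habs_cv _ Hq) as [l Hl]. exists l. apply is_series_Reals in Hl.
    eapply is_series_ext. 2: exact Hl. intro k. unfold Rpower. f_equal. f_equal. ring. }
  destruct (dir_eq a c s HserE) as [D [HD Hdir]].
  destruct (gam_impint s Hs1) as [G HG].
  rewrite (CGamma_eq s G HG), Hdir.
  apply (impint_ext (hh a c s)).
  - intros x Hx. unfold hh. f_equal.
    apply (CS_unique _ _ _ (FF_CS (AA a) c Hser x ltac:(lra))).
    apply Rc_expand; auto. lra.
  - apply main_impint; auto.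
Qed.
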